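(* Let $\lambda,\mu>0$, assume the grid is regular with constant $C_0$, and suppose the exact solution $\boldsymbol u=(u^x,u^y)$, $\underline\sigma=\begin{pmatrix}\sigma^{11}&\sigma^{12}\\\sigma^{12}&\sigma^{22}\end{pmatrix}$ of the elasticity problem is sufficiently smooth. Let $(W^x,W^y,Z^{11},Z^{22},Z^{12})$ be the solution of the MAC-E scheme with data $f^1_{i,j+1/2}=f^x(x_i,y_{j+1/2})$, $f^2_{i+1/2,j}=f^y(x_{i+1/2},y_j)$. Then, for $h$ and $l$ sufficiently small, there is a constant $C>0$ independent of $h$ and $l$ such that $$\|W^x-\tilde u^x\|_{TM}+\|W^y-\tilde u^y\|_{MT}\le C(h^2+l^2)(\|\boldsymbol u\|_{3,\infty}+\|\underline\sigma\|_{3,\infty}),$$ $$\|Z^{12}-\tilde\sigma^{12}\|_T\le C\mu(h^2+l^2)(\|\boldsymbol u\|_{3,\infty}+\|\underline\sigma\|_{3,\infty}),$$ $$\|Z^{11}-\tilde\sigma^{11}\|_M+\|Z^{22}-\tilde\sigma^{22}\|_M\le C(\lambda+\mu)(h^2+l^2)(\|\boldsymbol u\|_{3,\infty}+\|\underline\sigma\|_{3,\infty}).$$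
   Context: Continuous problem on $\Omega=(0,a)\times(0,b)$ with Lamé constants $\lambda,\mu>0$: $\frac1{2\mu}\big(\sigma^{11}-\frac{\lambda}{2\lambda+2\mu}(\sigma^{11}+\sigma^{22})\big)=\partial_xu^x$, $\frac1{2\mu}\big(\sigma^{22}-\frac{\lambda}{2\lambda+2\mu}(\sigma^{11}+\sigma^{22})\big)=\partial_yu^y$, $\sigma^{12}=\mu(\partial_yu^x+\partial_xu^y)$, $\partial_x\sigma^{11}+\partial_y\sigma^{12}=f^x$, $\partial_x\sigma^{12}+\partial_y\sigma^{22}=f^y$ in $\Omega$, $\boldsymbol u=0$ on $\partial\Omega$. Grid: $0=x_0<\dots<x_{n_x}=a$, $0=y_0<\dots<y_{n_y}=b$, $x_{i+1/2}=(x_i+x_{i+1})/2$, $h_{i+1/2}=x_{i+1}-x_i$, $h_i=(h_{i-1/2}+h_{i+1/2})/2$ ($1\le i\le n_x-1$), $h_0=h_{1/2}/2$, $h_{n_x}=h_{n_x-1/2}/2$, $h=\max h_{i+1/2}$; analogously $y_{j+1/2}$, $l_{j+1/2}$, $l_j$, $l_0=l_{1/2}/2$, $l_{n_y}=l_{n_y-1/2}/2$, $l=\max l_{j+1/2}$. Regularity: $\min_{i,j}\{h_{i+1/2},l_{j+1/2}\}\ge C_0\max_{i,j}\{h_{i+1/2},l_{j+1/2}\}$ for a fixed $C_0>0$. Write $\phi_{\alpha,\beta}=\phi(x_\alpha,y_\beta)$. Difference quotients: $[d_x\phi]_{i+1/2,m}=(\phi_{i+1,m}-\phi_{i,m})/h_{i+1/2}$,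 $[d_y\phi]_{k,j+1/2}=(\phi_{k,j+1}-\phi_{k,j})/l_{j+1/2}$, $[D_x\phi]_{i,m}=(\phi_{i+1/2,m}-\phi_{i-1/2,m})/h_i$ ($1\le i\le n_x-1$), $[D_y\phi]_{k,j}=(\phi_{k,j+1/2}-\phi_{k,j-1/2})/l_j$ ($1\le j\le n_y-1$), $[D_x\phi]_{0,m}=(\phi_{1/2,m}-\phi_{0,m})/h_0$, $[D_x\phi]_{n_x,m}=(\phi_{n_x,m}-\phi_{n_x-1/2,m})/h_{n_x}$, $[D_y\phi]_{k,0}=(\phi_{k,1/2}-\phi_{k,0})/l_0$, $[D_y\phi]_{k,n_y}=(\phi_{k,n_y}-\phi_{k,n_y-1/2})/l_{n_y}$. Inner products: $(\phi,\theta)_M=\sum_{i=0}^{n_x-1}\sum_{j=0}^{n_y-1}h_{i+1/2}l_{j+1/2}\phi_{i+1/2,j+1/2}\theta_{i+1/2,j+1/2}$, $(\phi,\theta)_T=\sum_{i=0}^{n_x}\sum_{j=0}^{n_y}h_il_j\phi_{i,j}\theta_{i,j}$, $(\phi,\theta)_{TM}=\sum_{i=1}^{n_x-1}\sum_{j=0}^{n_y-1}h_il_{j+1/2}\phi_{i,j+1/2}\theta_{i,j+1/2}$, $(\phi,\theta)_{MT}=\sum_{i=0}^{n_x-1}\sum_{j=1}^{n_y-1}h_{i+1/2}l_j\phi_{i+1/2,j}\theta_{i+1/2,j}$, $\|\phi\|_\xi^2=(\phi,\phi)_\xi$. MAC-E scheme: find $W^x$ at $(x_i,y_{j+1/2})$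 ($0\le i\le n_x,0\le j\le n_y-1$) and $(x_i,y_0),(x_i,y_{n_y})$; $W^y$ at $(x_{i+1/2},y_j)$ ($0\le i\le n_x-1,0\le j\le n_y$) and $(x_0,y_j),(x_{n_x},y_j)$; $Z^{11},Z^{22}$ at cell centers $(x_{i+1/2},y_{j+1/2})$; $Z^{12}$ at nodes $(x_i,y_j)$; with $W^x,W^y$ vanishing at all their points on $\partial\Omega$ and: $\frac1{2\mu}\big(Z^{11}-\frac{\lambda}{2\lambda+2\mu}(Z^{11}+Z^{22})\big)_{i+1/2,j+1/2}=[d_xW^x]_{i+1/2,j+1/2}$, $\frac1{2\mu}\big(Z^{22}-\frac{\lambda}{2\lambda+2\mu}(Z^{11}+Z^{22})\big)_{i+1/2,j+1/2}=[d_yW^y]_{i+1/2,j+1/2}$ ($0\le i\le n_x-1,0\le j\le n_y-1$); $Z^{12}_{i,j}=\mu([D_yW^x]_{i,j}+[D_xW^y]_{i,j})$ ($0\le i\le n_x,0\le j\le n_y$); $[D_xZ^{11}]_{i,j+1/2}+[d_yZ^{12}]_{i,j+1/2}=f^1_{i,j+1/2}$ ($1\le i\le n_x-1,0\le j\le n_y-1$); $[d_xZ^{12}]_{i+1/2,j}+[D_yZ^{22}]_{i+1/2,j}=f^2_{i+1/2,j}$ ($0\le i\le n_x-1,1\le j\le n_y-1$). Interpolants: $\tilde\sigma^{kk}_{i+1/2,j+1/2}=\big(\sigma^{kk}-\frac{h_{i+1/2}^2}{8}\partial_x^2\sigma^{kk}-\frac{l_{j+1/2}^2}{8}\partial_y^2\sigma^{kk}\big)_{i+1/2,j+1/2}$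 ($k=1,2$), $\tilde\sigma^{12}_{i,j}=\sigma^{12}_{i,j}$, $\tilde u^x_{i,j+1/2}=\big(u^x-\frac{l_{j+1/2}^2}{8}\partial_y^2u^x\big)_{i,j+1/2}$, $\tilde u^y_{i+1/2,j}=\big(u^y-\frac{h_{i+1/2}^2}{8}\partial_x^2u^y\big)_{i+1/2,j}$. $\|\cdot\|_{3,\infty}$ is the $W^{3,\infty}(\Omega)$ norm, taken componentwise-maximal for vector/tensor fields. *)

(* Defs.v *)
From Stdlib Require Import Reals Lra List.
Import ListNotations.
From Coquelicot Require Import Coquelicot.
Open Scope R_scope.

Definition pdx (f : R -> R -> R) : R -> R -> R :=
  fun x y => Derive (fun t => f t y) x.
Definition pdy (f : R -> R -> R) : R -> R -> R :=
  fun x y => Derive (fun t => f x t) y.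

(* iterated partial derivative; [true] = d/dx, [false] = d/dy,
   applied from the right end of the list first *)
Fixpoint pd (w : list bool) (f : R -> R -> R) : R -> R -> R :=
  match w with
  | nil => f
  | true :: w' => pdx (pd w' f)
  | false :: w' => pdy (pd w' f)
  end.

(* "sufficiently smooth": all iterated partial derivatives exist and are
   continuous (C^infinity on R^2). *)
Definition smooth2 (f : R -> R -> R) : Prop :=
  forall (w : list bool) (x y : R),
    ex_derive (fun t => pd w f t y) x /\
    ex_derive (fun t => pd w f x t) y /\
    continuous (fun p : R * R => pd w f (fst p) (snd p)) (x, y).

(* M bounds the W^{3,infty}(Omega) seminorms: every partial derivative of
   order <= 3 is bounded by M on Omega = (0,a) x (0,b).  Hence
   ||f||_{3,infty} <= M, and ||f||_{3,infty} is the least such M. *)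
Definition W3inf_bound (a b : R) (f : R -> R -> R) (M : R) : Prop :=
  forall (w : list bool), (List.length w <= 3)%nat ->
    forall x y, 0 < x < a -> 0 < y < b -> Rabs (pd w f x y) <= M.

Fixpoint rsum (n : nat) (f : nat -> R) : R :=
  match n with
  | O => 0
  | S k => rsum k f + f k
  end.

Fixpoint rmax (n : nat) (f : nat -> R) : R :=
  match n with
  | O => 0
  | S k => Rmax (rmax k f) (f k)
  end.

Definition is_grid (n : nat) (x : nat -> R) (a : R) : Prop :=
  x O = 0 /\ x n = a /\ forall i, (i < n)%nat -> x i < x (S i).

(* doubled-index coordinate: xh (2i) = x_i, xh (2i+1) = x_{i+1/2} *)
Definition xh (x : nat -> R) (K : nat) : R :=
  (x (Nat.div K 2) + x (Nat.div (S K) 2)) / 2.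

Definition hh (x : nat -> R) (i : nat) : R := x (S i) - x i.

Definition hn (n : nat) (x : nat -> R) (i : nat) : R :=
  if Nat.eqb i 0 then hh x 0 / 2
  else if Nat.eqb i n then hh x (n - 1) / 2
  else (hh x (i - 1) + hh x i) / 2.

Definition hmax (n : nat) (x : nat -> R) : R := rmax n (hh x).

(* Grid functions are represented on doubled indices:
   phi K M  is the value at (xh K, yh M).  1D difference quotients: *)

Definition dq (x : nat -> R) (phi : nat -> R) (i : nat) : R :=
  (phi (2 * i + 2)%nat - phi (2 * i)%nat) / hh x i.

Definition Dq (n : nat) (x : nat -> R) (phi : nat -> R) (i : nat) : R :=
  if Nat.eqb i 0 then (phi 1%nat - phi 0%nat) / hn n x 0
  else if Nat.eqb i n then (phi (2 * n)%nat - phi (2 * n - 1)%nat) / hn n x n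
  else (phi (2 * i + 1)%nat - phi (2 * i - 1)%nat) / hn n x i.

Definition d_x (x : nat -> R) (phi : nat -> nat -> R) (i M : nat) : R :=
  dq x (fun K => phi K M) i.
Definition d_y (y : nat -> R) (phi : nat -> nat -> R) (K j : nat) : R :=
  dq y (fun M => phi K M) j.
Definition D_x (nx : nat) (x : nat -> R) (phi : nat -> nat -> R) (i M : nat) : R :=
  Dq nx x (fun K => phi K M) i.
Definition D_y (ny : nat) (y : nat -> R) (phi : nat -> nat -> R) (K j : nat) : R :=
  Dq ny y (fun M => phi K M) j.

Definition normM (nx ny : nat) (x y : nat -> R) (phi : nat -> nat -> R) : R :=
  sqrt (rsum nx (fun i => rsum ny (fun j =>
     hh x i * hh y j * (phi (2 * i + 1)%nat (2 * j + 1)%nat) ^ 2))).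

Definition normT (nx ny : nat) (x y : nat -> R) (phi : nat -> nat -> R) : R :=
  sqrt (rsum (S nx) (fun i => rsum (S ny) (fun j =>
     hn nx x i * hn ny y j * (phi (2 * i)%nat (2 * j)%nat) ^ 2))).

(* i = 1 .. nx-1, j = 0 .. ny-1 *)
Definition normTM (nx ny : nat) (x y : nat -> R) (phi : nat -> nat -> R) : R :=
  sqrt (rsum (nx - 1) (fun i' => rsum ny (fun j =>
     hn nx x (S i') * hh y j * (phi (2 * S i')%nat (2 * j + 1)%nat) ^ 2))).

(* i = 0 .. nx-1, j = 1 .. ny-1 *)
Definition normMT (nx ny : nat) (x y : nat -> R) (phi : nat -> nat -> R) : R :=
  sqrt (rsum nx (fun i => rsum (ny - 1) (fun j' =>
     hh x i * hn ny y (S j') * (phi (2 * i + 1)%nat (2 * S j')%nat) ^ 2))).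

Definition elasticity_solution (a b lam mu : R)
  (ux uy s11 s12 s22 fx fy : R -> R -> R) : Prop :=
  (forall X Y, 0 < X < a -> 0 < Y < b ->
     / (2 * mu) * (s11 X Y - lam / (2 * lam + 2 * mu) * (s11 X Y + s22 X Y))
       = pdx ux X Y /\
     / (2 * mu) * (s22 X Y - lam / (2 * lam + 2 * mu) * (s11 X Y + s22 X Y))
       = pdy uy X Y /\
     s12 X Y = mu * (pdy ux X Y + pdx uy X Y) /\
     pdx s11 X Y + pdy s12 X Y = fx X Y /\
     pdx s12 X Y + pdy s22 X Y = fy X Y) /\
  (forall X, 0 <= X <= a ->
     ux X 0 = 0 /\ ux X b = 0 /\ uy X 0 = 0 /\ uy X b = 0) /\
  (forall Y, 0 <= Y <= b ->
     ux 0 Y = 0 /\ ux a Y = 0 /\ uy 0 Y = 0 /\ uy a Y = 0).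

(* ---------- the MAC-E scheme (doubled-index grid functions) ----------
   Wx lives at (2i, 2j+1) and the boundary points (2i,0), (2i,2ny);
   Wy at (2i+1, 2j) and (0,2j), (2nx,2j); Z11, Z22 at (2i+1,2j+1);
   Z12 at (2i,2j). *)
Definition MACE_solution (nx ny : nat) (x y : nat -> R) (lam mu : R)
  (fx fy : R -> R -> R) (Wx Wy Z11 Z22 Z12 : nat -> nat -> R) : Prop :=
  (forall i, (i <= nx)%nat -> Wx (2 * i)%nat 0%nat = 0 /\ Wx (2 * i)%nat (2 * ny)%nat = 0) /\
  (forall j, (j < ny)%nat -> Wx 0%nat (2 * j + 1)%nat = 0 /\ Wx (2 * nx)%nat (2 * j + 1)%nat = 0) /\
  (forall i, (i < nx)%nat -> Wy (2 * i + 1)%nat 0%nat = 0 /\ Wy (2 * i + 1)%nat (2 * ny)%nat = 0) /\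
  (forall j, (j <= ny)%nat -> Wy 0%nat (2 * j)%nat = 0 /\ Wy (2 * nx)%nat (2 * j)%nat = 0) /\
  (forall i j, (i < nx)%nat -> (j < ny)%nat ->
     let z11 := Z11 (2 * i + 1)%nat (2 * j + 1)%nat in
     let z22 := Z22 (2 * i + 1)%nat (2 * j + 1)%nat in
     / (2 * mu) * (z11 - lam / (2 * lam + 2 * mu) * (z11 + z22))
       = d_x x Wx i (2 * j + 1)%nat /\
     / (2 * mu) * (z22 - lam / (2 * lam + 2 * mu) * (z11 + z22))
       = d_y y Wy (2 * i + 1)%nat j) /\
  (forall i j, (i <= nx)%nat -> (j <= ny)%nat ->
     Z12 (2 * i)%nat (2 * j)%nat
       = mu * (D_y ny y Wx (2 * i)%nat j + D_x nx x Wy i (2 * j)%nat)) /\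
  (forall i j, (1 <= i)%nat -> (i <= nx - 1)%nat -> (j < ny)%nat ->
     D_x nx x Z11 i (2 * j + 1)%nat + d_y y Z12 (2 * i)%nat j
       = fx (xh x (2 * i)) (xh y (2 * j + 1))) /\
  (forall i j, (i < nx)%nat -> (1 <= j)%nat -> (j <= ny - 1)%nat ->
     d_x x Z12 i (2 * j)%nat + D_y ny y Z22 (2 * i + 1)%nat j
       = fy (xh x (2 * i + 1)) (xh y (2 * j))).

Definition tsig_kk (x y : nat -> R) (s : R -> R -> R) (K M : nat) : R :=
  let X := xh x K in let Y := xh y M in
  s X Y - (hh x (Nat.div K 2)) ^ 2 / 8 * pdx (pdx s) X Y
        - (hh y (Nat.div M 2)) ^ 2 / 8 * pdy (pdy s) X Y.
Definition tsig12 (x y : nat -> R) (s : R -> R -> R) (K M : nat) : R :=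
  s (xh x K) (xh y M).
Definition tux (x y : nat -> R) (u : R -> R -> R) (K M : nat) : R :=
  let X := xh x K in let Y := xh y M in
  u X Y - (hh y (Nat.div M 2)) ^ 2 / 8 * pdy (pdy u) X Y.
Definition tuy (x y : nat -> R) (u : R -> R -> R) (K M : nat) : R :=
  let X := xh x K in let Y := xh y M in
  u X Y - (hh x (Nat.div K 2)) ^ 2 / 8 * pdx (pdx u) X Y.

(* Main.v *)
Require Import Defs.
From Stdlib Require Import Reals.
From Coquelicot Require Import Coquelicot.
Open Scope R_scope.
From Stdlib Require Import Lra Lia Arith List.
Require Import Defs.

Lemma rsum_ext n f g : (forall k, (k < n)%nat -> f k = g k) -> rsum n f = rsum n g.
Proof. induction n; simpl; intros H; auto. rewrite IHn, H; auto. Qed.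

Lemma rsum_plus n f g : rsum n (fun k => f k + g k) = rsum n f + rsum n g.
Proof. induction n; simpl; [lra|]. rewrite IHn; lra. Qed.

Lemma rsum_scal n c f : rsum n (fun k => c * f k) = c * rsum n f.
Proof. induction n; simpl; [lra|]. rewrite IHn; lra. Qed.

Lemma rsum_le n f g : (forall k, (k < n)%nat -> f k <= g k) -> rsum n f <= rsum n g.
Proof. induction n; simpl; intros H; [lra|]. pose proof (H n ltac:(lia)). pose proof (IHn ltac:(intros; apply H; lia)). lra. Qed.

Lemma rsum_nonneg n f : (forall k, (k < n)%nat -> 0 <= f k) -> 0 <= rsum n f.
Proof. intros H. replace 0 with (rsum n (fun _ => 0)). apply rsum_le; auto.
  induction n; simpl; auto. rewrite IHn; [lra|]. intros; apply H; lia. Qed.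

Lemma rsum_shift n f : rsum (S n) f = f O + rsum n (fun k => f (S k)).
Proof. induction n; simpl in *; [lra|]. rewrite IHn. lra. Qed.

Lemma rsum_exchange n m (f : nat -> nat -> R) :
  rsum n (fun i => rsum m (fun j => f i j)) = rsum m (fun j => rsum n (fun i => f i j)).
Proof. induction n; simpl.
  - induction m; simpl; auto; lra.
  - rewrite IHn. rewrite <- rsum_plus. reflexivity. Qed.

Lemma rsum_tele n g : rsum n (fun k => g (S k) - g k) = g n - g O.
Proof. induction n; simpl; [lra|]. rewrite IHn; lra. Qed.

Lemma rsum_mono_n m n f : (m <= n)%nat -> (forall k, (k < n)%nat -> 0 <= f k) ->
  rsum m f <= rsum n f.
Proof. induction 1; intros Hf; [lra|]. simpl. pose proof (Hf m0 ltac:(lia)).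
  pose proof (IHle ltac:(intros; apply Hf; lia)). lra. Qed.

Lemma rsum_split_ends n g : (1 <= n)%nat ->
  rsum (S n) g = g O + rsum (n - 1) (fun i => g (S i)) + g n.
Proof. intros H. destruct n; [lia|]. rewrite rsum_shift. simpl rsum at 1.
  replace (S n - 1)%nat with n by lia. destruct n; simpl; lra. Qed.

Lemma abel m (z E : nat -> R) :
  rsum (S m) (fun j => z j * (E (S j) - E j)) + rsum m (fun k => E (S k) * (z (S k) - z k))
  = z m * E (S m) - z O * E O.
Proof. induction m.
  - simpl. lra.
  - change (rsum (S (S m)) (fun j => z j * (E (S j) - E j))) with
      (rsum (S m) (fun j => z j * (E (S j) - E j)) + z (S m) * (E (S (S m)) - E (S m))).
    simpl rsum at 2. lra. Qed.

Lemma rsum_sq_mult n (w q : nat -> R) :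
  (forall k, (k < n)%nat -> 0 <= w k) ->
  (rsum n (fun k => w k * q k)) ^ 2 <= rsum n w * rsum n (fun k => w k * q k ^ 2).
Proof. induction n; intros Hw; cbn [rsum]; [lra|].
  pose proof (IHn ltac:(intros; apply Hw; lia)) as IH.
  pose proof (Hw n ltac:(lia)) as wn.
  set (e := rsum n (fun k => w k * q k)) in *.
  set (X := rsum n w) in *. set (S0 := rsum n (fun k => w k * q k ^ 2)) in *.
  assert (HX : 0 <= X) by (apply rsum_nonneg; intros; apply Hw; lia).
  assert (HS : 0 <= S0) by (apply rsum_nonneg; intros; pose proof (Hw k ltac:(lia)); nra).
  assert (H2 : 2 * e * q n <= X * q n ^ 2 + S0).
  { assert (0 <= X * q n ^ 2 + S0) by nra.
    assert ((2 * e * q n) ^ 2 <= (X * q n ^ 2 + S0) ^ 2).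
    { assert (e^2 * q n ^2 <= X * S0 * q n ^ 2) by (apply Rmult_le_compat_r; [nra|lra]).
      assert (0 <= (X * q n ^ 2 - S0)^2) by apply pow2_ge_0.
      assert ((X * q n ^ 2 + S0) ^ 2 - (2 * e * q n) ^ 2 = (X * q n ^ 2 - S0)^2 + 4 * (X * S0 * q n ^ 2 - e^2 * q n ^2)) by ring. lra. }
    destruct (Rle_or_lt (2 * e * q n) 0); [lra|].
    apply Rsqr_incr_0_var; [rewrite !Rsqr_pow2; lra | lra]. }
  assert (0 <= w n * (X * q n ^ 2 + S0 - 2 * e * q n)) by (apply Rmult_le_pos; lra).
  assert ((X + w n) * (S0 + w n * q n ^ 2) - (e + w n * q n) ^ 2 =
     (X * S0 - e ^ 2) + w n * (X * q n ^ 2 + S0 - 2 * e * q n)) by ring.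
  lra. Qed.

Lemma div2_even i : Nat.div (2 * i) 2 = i.
Proof. rewrite Nat.mul_comm, Nat.div_mul; lia. Qed.
Lemma div2_odd i : Nat.div (2 * i + 1) 2 = i.
Proof. rewrite Nat.add_comm, Nat.mul_comm, Nat.div_add by lia. simpl. lia. Qed.
Lemma div2_odd_S i : Nat.div (S (2 * i + 1)) 2 = S i.
Proof. replace (S (2*i+1)) with (S i * 2)%nat by lia. rewrite Nat.div_mul; lia. Qed.
Lemma div2_even_S i : Nat.div (S (2 * i)) 2 = i.
Proof. replace (S (2*i)) with (2*i+1)%nat by lia. apply div2_odd. Qed.

Lemma xh_even x i : xh x (2 * i) = x i.
Proof. unfold xh. rewrite div2_even, div2_even_S. lra. Qed.
Lemma xh_odd x i : xh x (2 * i + 1) = (x i + x (S i)) / 2.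
Proof. unfold xh. rewrite div2_odd, div2_odd_S. lra. Qed.

Section Grid.
Variables (n : nat) (x : nat -> R) (a : R).
Hypothesis G : is_grid n x a.
Hypothesis Ha : 0 < a.

Lemma grid_n : (1 <= n)%nat.
Proof. destruct G as [G0 [Gn _]]. destruct n; [|lia]. rewrite G0 in Gn. lra. Qed.

Lemma grid_le k m : (k <= m)%nat -> (m <= n)%nat -> x k <= x m.
Proof. induction 1; intros; [lra|]. destruct G as [_ [_ Gi]].
  pose proof (Gi m ltac:(lia)). pose proof (IHle ltac:(lia)). lra. Qed.

Lemma grid_range k : (k <= n)%nat -> 0 <= x k <= a.
Proof. intros. destruct G as [G0 [Gn _]]. split.
  - rewrite <- G0. apply grid_le; lia.
  - rewrite <- Gn. apply grid_le; lia. Qed.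

Lemma hh_pos i : (i < n)%nat -> 0 < hh x i.
Proof. intros. destruct G as [_ [_ Gi]]. unfold hh. pose proof (Gi i H). lra. Qed.

Lemma hn_pos i : (i <= n)%nat -> 0 < hn n x i.
Proof. intros. pose proof grid_n. unfold hn.
  destruct (Nat.eqb_spec i 0). { pose proof (hh_pos 0 ltac:(lia)). lra. }
  destruct (Nat.eqb_spec i n). { pose proof (hh_pos (n-1) ltac:(lia)). lra. }
  pose proof (hh_pos (i-1) ltac:(lia)). pose proof (hh_pos i ltac:(lia)). lra. Qed.

Lemma hn_int i : (1 <= i)%nat -> (i <= n - 1)%nat -> hn n x i = (hh x (i - 1) + hh x i) / 2.
Proof. intros. unfold hn. destruct (Nat.eqb_spec i 0); [lia|]. destruct (Nat.eqb_spec i n); [lia|]. auto. Qed.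

Lemma sum_hh : rsum n (hh x) = a.
Proof. destruct G as [G0 [Gn _]]. unfold hh. rewrite (rsum_tele n x). lra. Qed.

Lemma sum_hh_S : rsum (n - 1) (fun i => hh x (S i)) = a - hh x O.
Proof. pose proof grid_n. pose proof sum_hh. replace n with (S (n-1)) in H0 at 1 by lia.
  rewrite rsum_shift in H0. lra. Qed.

Lemma sum_hh_pred : rsum (n - 1) (hh x) = a - hh x (n - 1).
Proof. pose proof grid_n. pose proof sum_hh. replace n with (S (n-1)) in H0 at 1 by lia.
  simpl in H0. lra. Qed.

Lemma sum_hn_int : rsum (n - 1) (fun i => hn n x (S i)) = a - hh x O / 2 - hh x (n - 1) / 2.
Proof. pose proof grid_n.
  rewrite (rsum_ext _ _ (fun i => / 2 * hh x i + / 2 * hh x (S i))).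
  - rewrite rsum_plus, !rsum_scal, sum_hh_S, sum_hh_pred. lra.
  - intros. rewrite hn_int by lia. replace (S k - 1)%nat with k by lia. lra. Qed.

Lemma sum_hn : rsum (S n) (hn n x) = a.
Proof. pose proof grid_n. rewrite rsum_split_ends by lia. rewrite sum_hn_int.
  unfold hn. rewrite Nat.eqb_refl. simpl Nat.eqb. destruct (Nat.eqb_spec n 0); [lia|]. rewrite Nat.eqb_refl. lra. Qed.

Lemma sum_hn_int_le : rsum (n - 1) (fun i => hn n x (S i)) <= a.
Proof. rewrite sum_hn_int. pose proof grid_n. pose proof (hh_pos 0 ltac:(lia)).
  pose proof (hh_pos (n-1) ltac:(lia)). lra. Qed.

Lemma hh_dq phi i : (i < n)%nat -> hh x i * dq x phi i = phi (2 * S i)%nat - phi (2 * i)%nat.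
Proof. intros. unfold dq. replace (2 * i + 2)%nat with (2 * S i)%nat by lia.
  pose proof (hh_pos i H). field. lra. Qed.

Lemma hn_Dq_int phi i : (1 <= i)%nat -> (i <= n - 1)%nat ->
  hn n x i * Dq n x phi i = phi (2 * i + 1)%nat - phi (2 * i - 1)%nat.
Proof. intros. pose proof (hn_pos i ltac:(lia)). unfold Dq.
  destruct (Nat.eqb_spec i 0); [lia|]. destruct (Nat.eqb_spec i n); [lia|]. field. lra. Qed.

Definition Eext (phi : nat -> R) (k : nat) : R :=
  if orb (Nat.eqb k 0) (Nat.eqb k (S n)) then 0 else phi (2 * k - 1)%nat.

Lemma Eext_0 phi : Eext phi O = 0.
Proof. reflexivity. Qed.
Lemma Eext_end phi : Eext phi (S n) = 0.
Proof. unfold Eext. rewrite Nat.eqb_refl, Bool.orb_true_r. auto. Qed.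
Lemma Eext_mid phi k : (1 <= k)%nat -> (k <= n)%nat -> Eext phi k = phi (2 * k - 1)%nat.
Proof. intros. unfold Eext. destruct (Nat.eqb_spec k 0); [lia|]. destruct (Nat.eqb_spec k (S n)); [lia|]. auto. Qed.

Lemma hn_Dq_E phi j : phi O = 0 -> phi (2 * n)%nat = 0 -> (j <= n)%nat ->
  hn n x j * Dq n x phi j = Eext phi (S j) - Eext phi j.
Proof. intros H0 Hn Hj. pose proof grid_n. pose proof (hn_pos j Hj). unfold Dq.
  destruct (Nat.eqb_spec j 0).
  - subst. rewrite Eext_0, Eext_mid by lia. simpl. rewrite H0. field. lra.
  - destruct (Nat.eqb_spec j n).
    + subst. rewrite Eext_end, Eext_mid by lia. rewrite Hn. field. lra.
    + rewrite !Eext_mid by lia.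
      replace (2 * S j - 1)%nat with (2 * j + 1)%nat by lia. field. lra. Qed.

Lemma hn_Dq_zero phi j : (forall k, (k <= 2 * n)%nat -> phi k = 0) -> (j <= n)%nat -> Dq n x phi j = 0.
Proof. intros H Hj. pose proof grid_n. unfold Dq.
  destruct (Nat.eqb_spec j 0). { rewrite !H by lia. unfold Rdiv; lra. }
  destruct (Nat.eqb_spec j n). { rewrite !H by lia. unfold Rdiv; lra. }
  rewrite !H by lia. unfold Rdiv; lra. Qed.

End Grid.

Lemma rmax_ge n f i : (i < n)%nat -> f i <= rmax n f.
Proof. induction n; intros; [lia|]. simpl. destruct (Nat.eq_dec i n).
  - subst. apply Rmax_r.
  - eapply Rle_trans; [apply IHn; lia| apply Rmax_l]. Qed.

Lemma rmax_nonneg n f : 0 <= rmax n f.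
Proof. induction n; simpl; [lra|]. eapply Rle_trans; [apply IHn|apply Rmax_l]. Qed.

Definition DS n m (w1 w2 : nat -> R) (f : nat -> nat -> R) : R :=
  rsum n (fun i => rsum m (fun j => w1 i * w2 j * f i j)).

Lemma DS_ext n m w1 w2 f g : (forall i j, (i < n)%nat -> (j < m)%nat -> f i j = g i j) ->
  DS n m w1 w2 f = DS n m w1 w2 g.
Proof. intros H. unfold DS. apply rsum_ext; intros. apply rsum_ext; intros. rewrite H; auto. Qed.

Lemma DS_plus n m w1 w2 f g : DS n m w1 w2 (fun i j => f i j + g i j) = DS n m w1 w2 f + DS n m w1 w2 g.
Proof. unfold DS. rewrite <- rsum_plus. apply rsum_ext; intros. rewrite <- rsum_plus.
  apply rsum_ext; intros. ring. Qed.

Lemma DS_scal n m w1 w2 c f : DS n m w1 w2 (fun i j => c * f i j) = c * DS n m w1 w2 f.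
Proof. unfold DS. rewrite <- rsum_scal. apply rsum_ext; intros. rewrite <- rsum_scal.
  apply rsum_ext; intros. ring. Qed.

Lemma DS_le n m w1 w2 f g :
  (forall i, (i < n)%nat -> 0 <= w1 i) -> (forall j, (j < m)%nat -> 0 <= w2 j) ->
  (forall i j, (i < n)%nat -> (j < m)%nat -> f i j <= g i j) ->
  DS n m w1 w2 f <= DS n m w1 w2 g.
Proof. intros H1 H2 H. unfold DS. apply rsum_le; intros. apply rsum_le; intros.
  apply Rmult_le_compat_l; auto. apply Rmult_le_pos; auto. Qed.

Lemma DS_const n m w1 w2 c : DS n m w1 w2 (fun _ _ => c) = c * (rsum n w1 * rsum m w2).
Proof. unfold DS. rewrite (rsum_ext _ _ (fun i => (c * rsum m w2) * w1 i)).
  - rewrite rsum_scal. ring.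
  - intros. rewrite (rsum_ext _ _ (fun j => (c * w1 k) * w2 j)) by (intros; ring).
    rewrite rsum_scal. ring. Qed.

Lemma DS_nonneg n m w1 w2 f :
  (forall i, (i < n)%nat -> 0 <= w1 i) -> (forall j, (j < m)%nat -> 0 <= w2 j) ->
  (forall i j, (i < n)%nat -> (j < m)%nat -> 0 <= f i j) -> 0 <= DS n m w1 w2 f.
Proof. intros. replace 0 with (DS n m w1 w2 (fun _ _ => 0)).
  apply DS_le; auto. rewrite DS_const. ring. Qed.

Lemma young k u v : 0 < k -> u * v <= k / 2 * u ^ 2 + v ^ 2 / (2 * k).
Proof. intros Hk. assert (0 <= (k * u - v) ^ 2 / k) by (apply Rdiv_le_0_compat; [apply pow2_ge_0|lra]).
  assert (k / 2 * u ^ 2 + v ^ 2 / (2 * k) - u * v = (k * u - v) ^ 2 / k / 2) by (field; lra).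
  lra. Qed.

(* 1D summation by parts *)
Section SBP.
Variables (n : nat) (x : nat -> R) (a : R).
Hypothesis G : is_grid n x a.
Hypothesis Ha : 0 < a.

Lemma sbpA (phi Z : nat -> R) : phi O = 0 -> phi (2 * n)%nat = 0 ->
  rsum n (fun i => hh x i * Z (2 * i + 1)%nat * dq x phi i)
  = - rsum (n - 1) (fun k => hn n x (S k) * phi (2 * S k)%nat * Dq n x Z (S k)).
Proof. intros H0 Hn. pose proof (grid_n n x a G Ha).
  rewrite (rsum_ext _ _ (fun i => Z (2 * i + 1)%nat * (phi (2 * S i)%nat - phi (2 * i)%nat))).
  2:{ intros. rewrite <- (hh_dq n x a G phi k H1). ring. }
  rewrite (rsum_ext (n-1) _ (fun k => phi (2 * S k)%nat * (Z (2 * S k + 1)%nat - Z (2 * k + 1)%nat))).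
  2:{ intros. rewrite Rmult_assoc, (Rmult_comm (phi _)), <- Rmult_assoc.
      rewrite (hn_Dq_int n x a G Ha) by lia. replace (2 * S k - 1)%nat with (2 * k + 1)%nat by lia.
      replace (2 * S k + 1)%nat with (2 * S k + 1)%nat by lia. ring. }
  pose proof (abel (n - 1) (fun i => Z (2 * i + 1)%nat) (fun k => phi (2 * k)%nat)) as Ab.
  cbv beta in Ab. replace (S (n - 1)) with n in Ab by lia.
  replace (2 * 0)%nat with O in Ab by lia. rewrite H0, Hn in Ab.
  lra. Qed.

Lemma sbpB (phi Z : nat -> R) : phi O = 0 -> phi (2 * n)%nat = 0 ->
  rsum (S n) (fun j => hn n x j * Z (2 * j)%nat * Dq n x phi j)
  = - rsum n (fun k => hh x k * phi (2 * k + 1)%nat * dq x Z k).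
Proof. intros H0 Hn. pose proof (grid_n n x a G Ha).
  rewrite (rsum_ext _ _ (fun j => Z (2 * j)%nat * (Eext n phi (S j) - Eext n phi j))).
  2:{ intros. rewrite <- (hn_Dq_E n x a G Ha phi k H0 Hn) by lia. ring. }
  rewrite (rsum_ext n _ (fun k => Eext n phi (S k) * (Z (2 * S k)%nat - Z (2 * k)%nat))).
  2:{ intros. rewrite Rmult_assoc, (Rmult_comm (phi _)), <- Rmult_assoc.
      rewrite (hh_dq n x a G) by lia. rewrite Eext_mid by lia.
      replace (2 * S k - 1)%nat with (2 * k + 1)%nat by lia. ring. }
  pose proof (abel n (fun i => Z (2 * i)%nat) (Eext n phi)) as Ab.
  rewrite Eext_end, Eext_0 in Ab. lra. Qed.

Lemma Dq_zero' (phi : nat -> R) j : phi O = 0 -> phi (2 * n)%nat = 0 ->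
  (forall k, (k < n)%nat -> phi (2 * k + 1)%nat = 0) -> (j <= n)%nat -> Dq n x phi j = 0.
Proof. intros H0 Hn Hk Hj. pose proof (grid_n n x a G Ha).
  pose proof (hn_Dq_E n x a G Ha phi j H0 Hn Hj). pose proof (hn_pos n x a G Ha j Hj).
  assert (Eext n phi (S j) - Eext n phi j = 0).
  { destruct (Nat.eq_dec j n).
    - subst. rewrite Eext_end. rewrite Eext_mid by lia. replace (2 * n - 1)%nat with (2 * (n-1) + 1)%nat by lia.
      rewrite Hk by lia. ring.
    - destruct (Nat.eq_dec j 0).
      + subst. rewrite Eext_0, Eext_mid by lia. pose proof (Hk 0%nat ltac:(lia)) as Hk0. simpl in Hk0 |- *. rewrite Hk0. ring.
      + rewrite !Eext_mid by lia. replace (2 * S j - 1)%nat with (2 * j + 1)%nat by lia.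
        replace (2 * j - 1)%nat with (2 * (j-1) + 1)%nat by lia. rewrite !Hk by lia. ring. }
  rewrite H3 in H1. apply Rmult_integral in H1. destruct H1; auto. lra. Qed.

Lemma poincare1 (phi : nat -> R) k : phi O = 0 -> (k <= n)%nat ->
  (phi (2 * k)%nat) ^ 2 <= a * rsum n (fun i => hh x i * (dq x phi i) ^ 2).
Proof. intros H0 Hk.
  assert (E : phi (2 * k)%nat = rsum k (fun i => hh x i * dq x phi i)).
  { rewrite (rsum_ext _ _ (fun i => phi (2 * S i)%nat - phi (2 * i)%nat)).
    - rewrite (rsum_tele k (fun i => phi (2 * i)%nat)). simpl. rewrite H0. ring.
    - intros. apply (hh_dq n x a G). lia. }
  rewrite E. eapply Rle_trans. apply rsum_sq_mult. intros; left; apply (hh_pos n x a G); lia.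
  assert (rsum k (hh x) <= a).
  { unfold hh. rewrite (rsum_tele k x). destruct G as [G0 _]. rewrite G0.
    pose proof (grid_range n x a G k Hk). lra. }
  assert (0 <= rsum k (fun i => hh x i * dq x phi i ^ 2)).
  { apply rsum_nonneg. intros i Hi. pose proof (hh_pos n x a G i ltac:(lia)). pose proof (pow2_ge_0 (dq x phi i)). nra. }
  assert (rsum k (fun i => hh x i * dq x phi i ^ 2) <= rsum n (fun i => hh x i * dq x phi i ^ 2)).
  { apply rsum_mono_n; auto. intros. pose proof (hh_pos n x a G k0 H2). pose proof (pow2_ge_0 (dq x phi k0)). nra. }
  assert (0 <= rsum k (hh x)) by (apply rsum_nonneg; intros; left; apply (hh_pos n x a G); lia).
  apply Rmult_le_compat; auto. Qed.

Lemma poincare1' (phi : nat -> R) : phi O = 0 ->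
  rsum (n - 1) (fun k => hn n x (S k) * (phi (2 * S k)%nat) ^ 2)
  <= a * a * rsum n (fun i => hh x i * (dq x phi i) ^ 2).
Proof. intros H0. eapply Rle_trans.
  - apply (rsum_le _ _ (fun k => hn n x (S k) * (a * rsum n (fun i => hh x i * (dq x phi i) ^ 2)))).
    intros. apply Rmult_le_compat_l. left; apply (hn_pos n x a G Ha); lia. apply poincare1; auto; lia.
  - rewrite (rsum_ext _ _ (fun k => (a * rsum n (fun i => hh x i * (dq x phi i) ^ 2)) * hn n x (S k))) by (intros; ring).
    rewrite rsum_scal. pose proof (sum_hn_int_le n x a G Ha).
    assert (0 <= rsum n (fun i => hh x i * dq x phi i ^ 2)).
    { apply rsum_nonneg. intros. pose proof (hh_pos n x a G k H1). pose proof (pow2_ge_0 (dq x phi k)). nra. }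
    assert (0 <= a * rsum n (fun i => hh x i * dq x phi i ^ 2)) by nra. nra. Qed.

End SBP.

Lemma rsum_opp n f : rsum n (fun k => - f k) = - rsum n f.
Proof. rewrite (rsum_ext _ _ (fun k => -1 * f k)) by (intros; ring). rewrite rsum_scal. ring. Qed.

Lemma rsum_zero n : rsum n (fun _ => 0) = 0.
Proof. induction n; simpl; auto. rewrite IHn; ring. Qed.

Section Energy.
Variables (nx ny : nat) (x y : nat -> R) (a b lam mu : R).
Hypothesis Gx : is_grid nx x a.
Hypothesis Gy : is_grid ny y b.
Hypotheses (Ha : 0 < a) (Hb : 0 < b) (Hlam : 0 < lam) (Hmu : 0 < mu).
Variables ex ey z11 z22 z12 r1 r2 : nat -> nat -> R.

Hypothesis Hex1 : forall i, (i <= nx)%nat -> ex (2*i)%nat 0%nat = 0 /\ ex (2*i)%nat (2*ny)%nat = 0.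
Hypothesis Hex2 : forall j, (j < ny)%nat -> ex 0%nat (2*j+1)%nat = 0 /\ ex (2*nx)%nat (2*j+1)%nat = 0.
Hypothesis Hey1 : forall i, (i < nx)%nat -> ey (2*i+1)%nat 0%nat = 0 /\ ey (2*i+1)%nat (2*ny)%nat = 0.
Hypothesis Hey2 : forall j, (j <= ny)%nat -> ey 0%nat (2*j)%nat = 0 /\ ey (2*nx)%nat (2*j)%nat = 0.
Hypothesis HE1 : forall i j, (1 <= i)%nat -> (i <= nx - 1)%nat -> (j < ny)%nat ->
  D_x nx x z11 i (2 * j + 1)%nat + d_y y z12 (2 * i)%nat j = r1 (2*i)%nat (2*j+1)%nat.
Hypothesis HE2 : forall i j, (i < nx)%nat -> (1 <= j)%nat -> (j <= ny - 1)%nat ->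
  d_x x z12 i (2 * j)%nat + D_y ny y z22 (2 * i + 1)%nat j = r2 (2*i+1)%nat (2*j)%nat.

Lemma I1 :
  DS nx ny (hh x) (hh y) (fun i j => z11 (2*i+1)%nat (2*j+1)%nat * d_x x ex i (2*j+1)%nat)
  + DS (S nx) (S ny) (hn nx x) (hn ny y) (fun i j => z12 (2*i)%nat (2*j)%nat * D_y ny y ex (2*i)%nat j)
  = - DS (nx - 1) ny (fun i => hn nx x (S i)) (hh y)
        (fun i j => ex (2 * S i)%nat (2*j+1)%nat * r1 (2 * S i)%nat (2*j+1)%nat).
Proof.
  pose proof (grid_n nx x a Gx Ha) as Hnx. pose proof (grid_n ny y b Gy Hb) as Hny.
  assert (Ia : DS nx ny (hh x) (hh y) (fun i j => z11 (2*i+1)%nat (2*j+1)%nat * d_x x ex i (2*j+1)%nat)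
     = - rsum (nx-1) (fun k => rsum ny (fun j => hn nx x (S k) * hh y j *
          (ex (2 * S k)%nat (2*j+1)%nat * D_x nx x z11 (S k) (2*j+1)%nat)))).
  { unfold DS. rewrite rsum_exchange, (rsum_exchange (nx-1)). rewrite <- rsum_opp.
    apply rsum_ext; intros j Hj.
    transitivity (hh y j * rsum nx (fun i => hh x i * z11 (2*i+1)%nat (2*j+1)%nat * dq x (fun K => ex K (2*j+1)%nat) i)).
    { rewrite <- rsum_scal. apply rsum_ext; intros; unfold d_x; ring. }
    rewrite (sbpA nx x a Gx Ha (fun K => ex K (2*j+1)%nat) (fun K => z11 K (2*j+1)%nat)) by (apply Hex2; auto).
    rewrite <- Ropp_mult_distr_r, <- rsum_scal. f_equal. apply rsum_ext; intros. unfold D_x. ring. }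
  assert (Ib : DS (S nx) (S ny) (hn nx x) (hn ny y) (fun i j => z12 (2*i)%nat (2*j)%nat * D_y ny y ex (2*i)%nat j)
     = - rsum (nx-1) (fun k => rsum ny (fun j => hn nx x (S k) * hh y j *
          (ex (2 * S k)%nat (2*j+1)%nat * d_y y z12 (2 * S k)%nat j)))).
  { unfold DS. rewrite rsum_split_ends by lia.
    assert (Hz : forall i, (i = 0 \/ i = nx)%nat ->
       rsum (S ny) (fun j => hn nx x i * hn ny y j * (z12 (2*i)%nat (2*j)%nat * D_y ny y ex (2*i)%nat j)) = 0).
    { intros i Hi. replace 0 with (rsum (S ny) (fun _ => 0)).
      - apply rsum_ext; intros j Hj. unfold D_y. rewrite (Dq_zero' ny y b Gy Hb); try ring.
        + apply Hex1; lia.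
        + apply Hex1; lia.
        + intros k Hk. destruct Hi; subst; [apply (Hex2 k Hk)| apply (Hex2 k Hk)].
        + lia.
      - apply rsum_zero. }
    rewrite (Hz 0%nat), (Hz nx) by auto. rewrite <- rsum_opp, Rplus_0_l, Rplus_0_r.
    apply rsum_ext; intros i Hi.
    transitivity (hn nx x (S i) * rsum (S ny) (fun j => hn ny y j * z12 (2 * S i)%nat (2*j)%nat * Dq ny y (fun M => ex (2 * S i)%nat M) j)).
    { rewrite <- rsum_scal. apply rsum_ext; intros; unfold D_y; ring. }
    rewrite (sbpB ny y b Gy Hb (fun M => ex (2 * S i)%nat M) (fun M => z12 (2 * S i)%nat M)) by (apply Hex1; lia).
    rewrite <- Ropp_mult_distr_r, <- rsum_scal. f_equal. apply rsum_ext; intros. unfold d_y. ring. }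
  rewrite Ia, Ib. unfold DS. rewrite <- Ropp_plus_distr, <- rsum_plus. f_equal.
  apply rsum_ext; intros i Hi. rewrite <- rsum_plus. apply rsum_ext; intros j Hj.
  rewrite <- (HE1 (S i) j) by lia. ring. Qed.

Lemma I2 :
  DS nx ny (hh x) (hh y) (fun i j => z22 (2*i+1)%nat (2*j+1)%nat * d_y y ey (2*i+1)%nat j)
  + DS (S nx) (S ny) (hn nx x) (hn ny y) (fun i j => z12 (2*i)%nat (2*j)%nat * D_x nx x ey i (2*j)%nat)
  = - DS nx (ny - 1) (hh x) (fun j => hn ny y (S j))
        (fun i j => ey (2 * i + 1)%nat (2 * S j)%nat * r2 (2 * i + 1)%nat (2 * S j)%nat).
Proof.
  pose proof (grid_n nx x a Gx Ha) as Hnx. pose proof (grid_n ny y b Gy Hb) as Hny.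
  assert (Ia : DS nx ny (hh x) (hh y) (fun i j => z22 (2*i+1)%nat (2*j+1)%nat * d_y y ey (2*i+1)%nat j)
     = - rsum nx (fun i => rsum (ny-1) (fun k => hh x i * hn ny y (S k) *
          (ey (2 * i + 1)%nat (2 * S k)%nat * D_y ny y z22 (2*i+1)%nat (S k))))).
  { unfold DS. rewrite <- rsum_opp.
    apply rsum_ext; intros i Hi.
    transitivity (hh x i * rsum ny (fun j => hh y j * z22 (2*i+1)%nat (2*j+1)%nat * dq y (fun M => ey (2*i+1)%nat M) j)).
    { rewrite <- rsum_scal. apply rsum_ext; intros; unfold d_y; ring. }
    rewrite (sbpA ny y b Gy Hb (fun M => ey (2*i+1)%nat M) (fun M => z22 (2*i+1)%nat M)) by (apply Hey1; auto).
    rewrite <- Ropp_mult_distr_r, <- rsum_scal. f_equal. apply rsum_ext; intros. unfold D_y. ring. }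
  assert (Ib : DS (S nx) (S ny) (hn nx x) (hn ny y) (fun i j => z12 (2*i)%nat (2*j)%nat * D_x nx x ey i (2*j)%nat)
     = - rsum nx (fun i => rsum (ny-1) (fun k => hh x i * hn ny y (S k) *
          (ey (2 * i + 1)%nat (2 * S k)%nat * d_x x z12 i (2 * S k)%nat)))).
  { unfold DS. rewrite rsum_exchange, (rsum_exchange nx). rewrite rsum_split_ends by lia.
    assert (Hz : forall j, (j = 0 \/ j = ny)%nat ->
       rsum (S nx) (fun i => hn nx x i * hn ny y j * (z12 (2*i)%nat (2*j)%nat * D_x nx x ey i (2*j)%nat)) = 0).
    { intros j Hj. replace 0 with (rsum (S nx) (fun _ => 0)).
      - apply rsum_ext; intros i Hi. unfold D_x. rewrite (Dq_zero' nx x a Gx Ha); try ring.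
        + apply Hey2; lia.
        + apply Hey2; lia.
        + intros k Hk. destruct Hj; subst; [apply (Hey1 k Hk)| apply (Hey1 k Hk)].
        + lia.
      - apply rsum_zero. }
    rewrite (Hz 0%nat), (Hz ny) by auto. rewrite <- rsum_opp, Rplus_0_l, Rplus_0_r.
    apply rsum_ext; intros j Hj.
    transitivity (hn ny y (S j) * rsum (S nx) (fun i => hn nx x i * z12 (2 * i)%nat (2 * S j)%nat * Dq nx x (fun K => ey K (2 * S j)%nat) i)).
    { rewrite <- rsum_scal. apply rsum_ext; intros; unfold D_x; ring. }
    rewrite (sbpB nx x a Gx Ha (fun K => ey K (2 * S j)%nat) (fun K => z12 K (2 * S j)%nat)) by (apply Hey2; lia).
    rewrite <- Ropp_mult_distr_r, <- rsum_scal. f_equal. apply rsum_ext; intros. unfold d_x. ring. }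
  rewrite Ia, Ib. unfold DS. rewrite <- Ropp_plus_distr, <- rsum_plus. f_equal.
  apply rsum_ext; intros i Hi. rewrite <- rsum_plus. apply rsum_ext; intros j Hj.
  rewrite <- (HE2 i (S j)) by lia. ring. Qed.

End Energy.

Lemma pw_lower lam mu Z1 Z2 : 0 < lam -> 0 < mu ->
  / (2 * mu) * (Z1 - lam / (2 * lam + 2 * mu) * (Z1 + Z2)) * Z1
  + / (2 * mu) * (Z2 - lam / (2 * lam + 2 * mu) * (Z1 + Z2)) * Z2
  >= / (2 * (lam + mu)) * (Z1 ^ 2 + Z2 ^ 2).
Proof. intros. set (c := lam / (2 * lam + 2 * mu)).
  assert (Hc : 0 <= c) by (unfold c; apply Rdiv_le_0_compat; lra).
  assert (E : / (2 * mu) * (Z1 - c * (Z1 + Z2)) * Z1 + / (2 * mu) * (Z2 - c * (Z1 + Z2)) * Z2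
     - / (2 * (lam + mu)) * (Z1 ^ 2 + Z2 ^ 2) = c / (2 * mu) * (Z1 - Z2) ^ 2).
  { unfold c. field. lra. }
  assert (0 <= c / (2 * mu) * (Z1 - Z2) ^ 2).
  { apply Rmult_le_pos; [apply Rdiv_le_0_compat; lra| apply pow2_ge_0]. }
  lra. Qed.

Lemma pw_A_sq lam mu Z1 Z2 : 0 < lam -> 0 < mu ->
  (/ (2 * mu) * (Z1 - lam / (2 * lam + 2 * mu) * (Z1 + Z2))) ^ 2 <= (Z1 ^ 2 + Z2 ^ 2) / mu ^ 2.
Proof. intros. set (c := lam / (2 * lam + 2 * mu)).
  assert (Hc : 0 <= c <= 1/2).
  { unfold c. split. apply Rdiv_le_0_compat; lra. apply Rmult_le_reg_r with (2*lam+2*mu); [lra|].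
    unfold Rdiv. rewrite Rmult_assoc, Rinv_l by lra. lra. }
  set (w := Z1 - c * (Z1 + Z2)).
  assert (w ^ 2 <= 2 * (Z1 ^ 2 + Z2 ^ 2)).
  { unfold w. assert (((1 - c) * Z1) ^ 2 <= Z1 ^ 2).
    { rewrite Rpow_mult_distr. assert ((1-c)^2 <= 1) by nra. pose proof (pow2_ge_0 Z1). nra. }
    assert ((c * Z2) ^ 2 <= Z2 ^ 2).
    { rewrite Rpow_mult_distr. assert (c^2 <= 1) by nra. pose proof (pow2_ge_0 Z2). nra. }
    assert ((Z1 - c * (Z1 + Z2)) ^ 2 = ((1 - c) * Z1 - c * Z2) ^ 2) by ring.
    assert (0 <= ((1 - c) * Z1 + c * Z2) ^ 2) by apply pow2_ge_0.
    assert (((1 - c) * Z1 - c * Z2) ^ 2 + ((1 - c) * Z1 + c * Z2) ^ 2 = 2 * (((1 - c) * Z1) ^ 2 + (c * Z2) ^ 2)) by ring.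
    lra. }
  replace ((/ (2 * mu) * w) ^ 2) with (w ^ 2 / (4 * mu ^ 2)) by (field; lra).
  assert (0 < mu ^ 2) by (apply pow_lt; lra).
  apply Rmult_le_reg_r with (4 * mu ^ 2); [lra|].
  unfold Rdiv. rewrite Rmult_assoc, Rinv_l by lra.
  replace ((Z1 ^ 2 + Z2 ^ 2) * / mu ^ 2 * (4 * mu ^ 2)) with (4 * (Z1 ^ 2 + Z2 ^ 2)) by (field; lra).
  pose proof (pow2_ge_0 Z1). pose proof (pow2_ge_0 Z2). lra. Qed.

Definition k1c lam mu := / (2 * (lam + mu)).
Definition Lc a b := a * a + b * b.
Definition etac a b lam mu := k1c lam mu * mu ^ 2 / (8 * Lc a b).
Definition K0c a b lam mu := / k1c lam mu + mu / 2 + / (2 * etac a b lam mu) + 2 * etac a b lam mu * Lc a b.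
Definition KPc a b lam mu := 4 * (a * b) * K0c a b lam mu / k1c lam mu.
Definition KQc a b lam mu := 2 * mu * (a * b) * K0c a b lam mu.
Definition KXc a b lam mu := Lc a b * (2 * KPc a b lam mu / mu ^ 2 + 2 * (a * b)).
Definition Ken a b lam mu := KPc a b lam mu + KQc a b lam mu + KXc a b lam mu.

Section Energy2.
Variables (nx ny : nat) (x y : nat -> R) (a b lam mu : R).
Hypothesis Gx : is_grid nx x a.
Hypothesis Gy : is_grid ny y b.
Hypotheses (Ha : 0 < a) (Hb : 0 < b) (Hlam : 0 < lam) (Hmu : 0 < mu).
Variables ex ey z11 z22 z12 r11 r22 r12 r1 r2 : nat -> nat -> R.
Variable rho : R.
Hypothesis Hrho : 0 <= rho.

Hypothesis Hex1 : forall i, (i <= nx)%nat -> ex (2*i)%nat 0%nat = 0 /\ ex (2*i)%nat (2*ny)%nat = 0.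
Hypothesis Hex2 : forall j, (j < ny)%nat -> ex 0%nat (2*j+1)%nat = 0 /\ ex (2*nx)%nat (2*j+1)%nat = 0.
Hypothesis Hey1 : forall i, (i < nx)%nat -> ey (2*i+1)%nat 0%nat = 0 /\ ey (2*i+1)%nat (2*ny)%nat = 0.
Hypothesis Hey2 : forall j, (j <= ny)%nat -> ey 0%nat (2*j)%nat = 0 /\ ey (2*nx)%nat (2*j)%nat = 0.
Hypothesis HC : forall i j, (i < nx)%nat -> (j < ny)%nat ->
  / (2 * mu) * (z11 (2*i+1)%nat (2*j+1)%nat - lam / (2 * lam + 2 * mu) * (z11 (2*i+1)%nat (2*j+1)%nat + z22 (2*i+1)%nat (2*j+1)%nat))
    = d_x x ex i (2*j+1)%nat + r11 (2*i+1)%nat (2*j+1)%nat /\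
  / (2 * mu) * (z22 (2*i+1)%nat (2*j+1)%nat - lam / (2 * lam + 2 * mu) * (z11 (2*i+1)%nat (2*j+1)%nat + z22 (2*i+1)%nat (2*j+1)%nat))
    = d_y y ey (2*i+1)%nat j + r22 (2*i+1)%nat (2*j+1)%nat.
Hypothesis H12 : forall i j, (i <= nx)%nat -> (j <= ny)%nat ->
  z12 (2*i)%nat (2*j)%nat = mu * (D_y ny y ex (2*i)%nat j + D_x nx x ey i (2*j)%nat) + r12 (2*i)%nat (2*j)%nat.
Hypothesis HE1 : forall i j, (1 <= i)%nat -> (i <= nx - 1)%nat -> (j < ny)%nat ->
  D_x nx x z11 i (2 * j + 1)%nat + d_y y z12 (2 * i)%nat j = r1 (2*i)%nat (2*j+1)%nat.
Hypothesis HE2 : forall i j, (i < nx)%nat -> (1 <= j)%nat -> (j <= ny - 1)%nat ->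
  d_x x z12 i (2 * j)%nat + D_y ny y z22 (2 * i + 1)%nat j = r2 (2*i+1)%nat (2*j)%nat.
Hypothesis B11 : forall i j, (i < nx)%nat -> (j < ny)%nat ->
  Rabs (r11 (2*i+1)%nat (2*j+1)%nat) <= rho /\ Rabs (r22 (2*i+1)%nat (2*j+1)%nat) <= rho.
Hypothesis B12 : forall i j, (i <= nx)%nat -> (j <= ny)%nat -> Rabs (r12 (2*i)%nat (2*j)%nat) <= mu * rho.
Hypothesis B1 : forall i j, (1 <= i)%nat -> (i <= nx - 1)%nat -> (j < ny)%nat -> Rabs (r1 (2*i)%nat (2*j+1)%nat) <= rho.
Hypothesis B2 : forall i j, (i < nx)%nat -> (1 <= j)%nat -> (j <= ny - 1)%nat -> Rabs (r2 (2*i+1)%nat (2*j)%nat) <= rho.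

Let SM := DS nx ny (hh x) (hh y).
Let ST := DS (S nx) (S ny) (hn nx x) (hn ny y).
Let STM := DS (nx - 1) ny (fun i => hn nx x (S i)) (hh y).
Let SMT := DS nx (ny - 1) (hh x) (fun j => hn ny y (S j)).

Lemma sq_abs_le u r : Rabs u <= r -> u ^ 2 <= r ^ 2.
Proof. intros. rewrite <- (pow2_abs u). pose proof (Rabs_pos u). apply pow_incr; lra. Qed.

Lemma energy_bound :
  SM (fun i j => z11 (2*i+1)%nat (2*j+1)%nat ^ 2) <= Ken a b lam mu * rho ^ 2 /\
  SM (fun i j => z22 (2*i+1)%nat (2*j+1)%nat ^ 2) <= Ken a b lam mu * rho ^ 2 /\
  ST (fun i j => z12 (2*i)%nat (2*j)%nat ^ 2) <= Ken a b lam mu * rho ^ 2 /\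
  STM (fun i j => ex (2 * S i)%nat (2*j+1)%nat ^ 2) <= Ken a b lam mu * rho ^ 2 /\
  SMT (fun i j => ey (2*i+1)%nat (2 * S j)%nat ^ 2) <= Ken a b lam mu * rho ^ 2.
Proof.
  pose proof (grid_n nx x a Gx Ha) as Hnx. pose proof (grid_n ny y b Gy Hb) as Hny.
  assert (wMx : forall i, (i < nx)%nat -> 0 <= hh x i) by (intros; left; apply (hh_pos nx x a Gx); auto).
  assert (wMy : forall j, (j < ny)%nat -> 0 <= hh y j) by (intros; left; apply (hh_pos ny y b Gy); auto).
  assert (wTx : forall i, (i < S nx)%nat -> 0 <= hn nx x i) by (intros; left; apply (hn_pos nx x a Gx Ha); lia).
  assert (wTy : forall j, (j < S ny)%nat -> 0 <= hn ny y j) by (intros; left; apply (hn_pos ny y b Gy Hb); lia).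
  assert (wIx : forall i, (i < nx - 1)%nat -> 0 <= hn nx x (S i)) by (intros; left; apply (hn_pos nx x a Gx Ha); lia).
  assert (wIy : forall j, (j < ny - 1)%nat -> 0 <= hn ny y (S j)) by (intros; left; apply (hn_pos ny y b Gy Hb); lia).
  pose proof (sum_hh nx x a Gx) as sMx. pose proof (sum_hh ny y b Gy) as sMy.
  pose proof (sum_hn nx x a Gx Ha) as sTx. pose proof (sum_hn ny y b Gy Hb) as sTy.
  pose proof (sum_hn_int_le nx x a Gx Ha) as sIx. pose proof (sum_hn_int_le ny y b Gy Hb) as sIy.
  set (c := lam / (2 * lam + 2 * mu)).
  set (Z1 := fun i j => z11 (2*i+1)%nat (2*j+1)%nat).
  set (Z2 := fun i j => z22 (2*i+1)%nat (2*j+1)%nat).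
  set (A1 := fun i j => / (2 * mu) * (Z1 i j - c * (Z1 i j + Z2 i j))).
  set (A2 := fun i j => / (2 * mu) * (Z2 i j - c * (Z1 i j + Z2 i j))).
  set (k1 := k1c lam mu). set (eta := etac a b lam mu). set (L := Lc a b).
  assert (Hk1 : 0 < k1) by (unfold k1, k1c; apply Rinv_0_lt_compat; lra).
  assert (HL : 0 < L) by (unfold L, Lc; nra).
  assert (Heta : 0 < eta).
  { unfold eta, etac. fold k1. fold L. apply Rdiv_lt_0_compat; [|lra]. apply Rmult_lt_0_compat; auto. apply pow_lt; lra. }
  set (P := SM (fun i j => Z1 i j ^ 2 + Z2 i j ^ 2)).
  set (Q := ST (fun i j => z12 (2*i)%nat (2*j)%nat ^ 2)).
  set (X := STM (fun i j => ex (2 * S i)%nat (2*j+1)%nat ^ 2)).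
  set (Y := SMT (fun i j => ey (2*i+1)%nat (2 * S j)%nat ^ 2)).
  assert (Eid : SM (fun i j => A1 i j * Z1 i j + A2 i j * Z2 i j) + ST (fun i j => / mu * z12 (2*i)%nat (2*j)%nat ^ 2)
     = - STM (fun i j => ex (2 * S i)%nat (2*j+1)%nat * r1 (2 * S i)%nat (2*j+1)%nat)
       - SMT (fun i j => ey (2 * i + 1)%nat (2 * S j)%nat * r2 (2 * i + 1)%nat (2 * S j)%nat)
       + SM (fun i j => r11 (2*i+1)%nat (2*j+1)%nat * Z1 i j + r22 (2*i+1)%nat (2*j+1)%nat * Z2 i j)
       + ST (fun i j => / mu * (z12 (2*i)%nat (2*j)%nat * r12 (2*i)%nat (2*j)%nat))).
  { pose proof (I1 nx ny x y a b Gx Gy Ha Hb ex z11 z12 r1 Hex1 Hex2 HE1) as E1.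
    pose proof (I2 nx ny x y a b Gx Gy Ha Hb ey z22 z12 r2 Hey1 Hey2 HE2) as E2.
    assert (SM (fun i j => A1 i j * Z1 i j + A2 i j * Z2 i j) =
      SM (fun i j => z11 (2*i+1)%nat (2*j+1)%nat * d_x x ex i (2*j+1)%nat) +
      SM (fun i j => z22 (2*i+1)%nat (2*j+1)%nat * d_y y ey (2*i+1)%nat j) +
      SM (fun i j => r11 (2*i+1)%nat (2*j+1)%nat * Z1 i j + r22 (2*i+1)%nat (2*j+1)%nat * Z2 i j)).
    { unfold SM. rewrite <- !DS_plus. apply DS_ext. intros i j Hi Hj.
      destruct (HC i j Hi Hj) as [C1 C2]. unfold A1, A2, Z1, Z2. fold c in C1, C2.
      rewrite C1, C2. ring. }
    assert (ST (fun i j => / mu * z12 (2*i)%nat (2*j)%nat ^ 2) =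
      ST (fun i j => z12 (2*i)%nat (2*j)%nat * D_y ny y ex (2*i)%nat j) +
      ST (fun i j => z12 (2*i)%nat (2*j)%nat * D_x nx x ey i (2*j)%nat) +
      ST (fun i j => / mu * (z12 (2*i)%nat (2*j)%nat * r12 (2*i)%nat (2*j)%nat))).
    { unfold ST. rewrite <- !DS_plus. apply DS_ext. intros i j Hi Hj.
      set (zz := z12 (2*i)%nat (2*j)%nat). assert (Hz : zz = mu * (D_y ny y ex (2*i)%nat j + D_x nx x ey i (2*j)%nat) + r12 (2*i)%nat (2*j)%nat) by (apply H12; lia).
      replace (/ mu * zz ^ 2) with (/ mu * zz * zz) by ring. rewrite Hz at 2. field. lra. }
    unfold SM, ST, STM, SMT in *. lra. }
  assert (Elow : k1 * P <= SM (fun i j => A1 i j * Z1 i j + A2 i j * Z2 i j)).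
  { unfold P, SM. rewrite <- DS_scal. apply DS_le; auto. intros. unfold A1, A2, k1, k1c, c.
    pose proof (pw_lower lam mu (Z1 i j) (Z2 i j) Hlam Hmu). lra. }
  assert (EQ : ST (fun i j => / mu * z12 (2*i)%nat (2*j)%nat ^ 2) = / mu * Q).
  { unfold Q, ST. apply DS_scal. }
  assert (R1 : SM (fun i j => r11 (2*i+1)%nat (2*j+1)%nat * Z1 i j + r22 (2*i+1)%nat (2*j+1)%nat * Z2 i j)
     <= k1 / 2 * P + rho ^ 2 / k1 * (a * b)).
  { eapply Rle_trans.
    - apply (DS_le _ _ _ _ _ (fun i j => k1 / 2 * (Z1 i j ^ 2 + Z2 i j ^ 2) + rho ^ 2 / k1)); auto.
      intros i j Hi Hj. destruct (B11 i j Hi Hj) as [b1 b2].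
      pose proof (young k1 (Z1 i j) (r11 (2*i+1)%nat (2*j+1)%nat) Hk1).
      pose proof (young k1 (Z2 i j) (r22 (2*i+1)%nat (2*j+1)%nat) Hk1).
      pose proof (sq_abs_le _ _ b1). pose proof (sq_abs_le _ _ b2).
      assert (r11 (2*i+1)%nat (2*j+1)%nat ^ 2 / (2 * k1) <= rho ^ 2 / (2 * k1)) by (apply Rmult_le_compat_r; [left; apply Rinv_0_lt_compat; lra|lra]).
      assert (r22 (2*i+1)%nat (2*j+1)%nat ^ 2 / (2 * k1) <= rho ^ 2 / (2 * k1)) by (apply Rmult_le_compat_r; [left; apply Rinv_0_lt_compat; lra|lra]).
      assert (rho ^ 2 / k1 = rho ^ 2 / (2 * k1) + rho ^ 2 / (2 * k1)) by (field; lra).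
      lra.
    - unfold P, SM. rewrite DS_plus, DS_scal, DS_const, sMx, sMy. lra. }
  assert (R2 : ST (fun i j => / mu * (z12 (2*i)%nat (2*j)%nat * r12 (2*i)%nat (2*j)%nat))
     <= / (2 * mu) * Q + mu * rho ^ 2 / 2 * (a * b)).
  { eapply Rle_trans.
    - apply (DS_le _ _ _ _ _ (fun i j => / (2 * mu) * z12 (2*i)%nat (2*j)%nat ^ 2 + mu * rho ^ 2 / 2)); auto.
      intros i j Hi Hj. pose proof (B12 i j ltac:(lia) ltac:(lia)) as b1.
      pose proof (young 1 (z12 (2*i)%nat (2*j)%nat) (r12 (2*i)%nat (2*j)%nat) ltac:(lra)).
      pose proof (sq_abs_le _ _ b1).
      assert (E : / mu * (z12 (2*i)%nat (2*j)%nat * r12 (2*i)%nat (2*j)%nat) <=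
                  / mu * (1 / 2 * z12 (2*i)%nat (2*j)%nat ^ 2 + r12 (2*i)%nat (2*j)%nat ^ 2 / (2 * 1)))
        by (apply Rmult_le_compat_l; [left; apply Rinv_0_lt_compat; lra| lra]).
      assert (/ mu * (r12 (2*i)%nat (2*j)%nat ^ 2 / (2 * 1)) <= / mu * ((mu * rho) ^ 2 / 2))
        by (apply Rmult_le_compat_l; [left; apply Rinv_0_lt_compat; lra| lra]).
      assert (/ mu * ((mu * rho) ^ 2 / 2) = mu * rho ^ 2 / 2) by (field; lra).
      assert (/ mu * (1 / 2 * z12 (2*i)%nat (2*j)%nat ^ 2 + r12 (2*i)%nat (2*j)%nat ^ 2 / (2 * 1)) =
         / (2 * mu) * z12 (2*i)%nat (2*j)%nat ^ 2 + / mu * (r12 (2*i)%nat (2*j)%nat ^ 2 / (2 * 1))) by (field; lra).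
      lra.
    - unfold Q, ST. rewrite DS_plus, DS_scal, DS_const, sTx, sTy. lra. }
  assert (R3 : - STM (fun i j => ex (2 * S i)%nat (2*j+1)%nat * r1 (2 * S i)%nat (2*j+1)%nat)
     <= eta * X + rho ^ 2 / (4 * eta) * (a * b)).
  { assert (- STM (fun i j => ex (2 * S i)%nat (2*j+1)%nat * r1 (2 * S i)%nat (2*j+1)%nat) =
       STM (fun i j => ex (2 * S i)%nat (2*j+1)%nat * - r1 (2 * S i)%nat (2*j+1)%nat)).
    { unfold STM. rewrite <- (Rmult_1_l (DS _ _ _ _ _)), Ropp_mult_distr_l, <- DS_scal. apply DS_ext. intros; ring. }
    rewrite H. eapply Rle_trans.
    - apply (DS_le _ _ _ _ _ (fun i j => eta * ex (2 * S i)%nat (2*j+1)%nat ^ 2 + rho ^ 2 / (4 * eta))); auto.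
      intros i j Hi Hj. pose proof (B1 (S i) j ltac:(lia) ltac:(lia) Hj) as b1.
      pose proof (young (2 * eta) (ex (2 * S i)%nat (2*j+1)%nat) (- r1 (2 * S i)%nat (2*j+1)%nat) ltac:(lra)).
      rewrite <- Rabs_Ropp in b1. pose proof (sq_abs_le _ _ b1).
      assert ((- r1 (2 * S i)%nat (2*j+1)%nat) ^ 2 / (2 * (2 * eta)) <= rho ^ 2 / (4 * eta)).
      { replace (2 * (2 * eta)) with (4 * eta) by ring. apply Rmult_le_compat_r; [left; apply Rinv_0_lt_compat; lra|lra]. }
      replace (2 * eta / 2) with eta in H0 by field. lra.
    - unfold X, STM. rewrite DS_plus, DS_scal, DS_const, sMy.
      assert (0 <= rho ^ 2 / (4 * eta)) by (apply Rdiv_le_0_compat; [apply pow2_ge_0|lra]).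
      assert (rho ^ 2 / (4 * eta) * (rsum (nx - 1) (fun i : nat => hn nx x (S i)) * b) <= rho ^ 2 / (4 * eta) * (a * b)).
      { apply Rmult_le_compat_l; auto. apply Rmult_le_compat_r; lra. }
      lra. }
  assert (R4 : - SMT (fun i j => ey (2 * i + 1)%nat (2 * S j)%nat * r2 (2 * i + 1)%nat (2 * S j)%nat)
     <= eta * Y + rho ^ 2 / (4 * eta) * (a * b)).
  { assert (- SMT (fun i j => ey (2 * i + 1)%nat (2 * S j)%nat * r2 (2 * i + 1)%nat (2 * S j)%nat) =
       SMT (fun i j => ey (2 * i + 1)%nat (2 * S j)%nat * - r2 (2 * i + 1)%nat (2 * S j)%nat)).
    { unfold SMT. rewrite <- (Rmult_1_l (DS _ _ _ _ _)), Ropp_mult_distr_l, <- DS_scal. apply DS_ext. intros; ring. }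
    rewrite H. eapply Rle_trans.
    - apply (DS_le _ _ _ _ _ (fun i j => eta * ey (2 * i + 1)%nat (2 * S j)%nat ^ 2 + rho ^ 2 / (4 * eta))); auto.
      intros i j Hi Hj. pose proof (B2 i (S j) Hi ltac:(lia) ltac:(lia)) as b1.
      pose proof (young (2 * eta) (ey (2 * i + 1)%nat (2 * S j)%nat) (- r2 (2 * i + 1)%nat (2 * S j)%nat) ltac:(lra)).
      rewrite <- Rabs_Ropp in b1. pose proof (sq_abs_le _ _ b1).
      assert ((- r2 (2 * i + 1)%nat (2 * S j)%nat) ^ 2 / (2 * (2 * eta)) <= rho ^ 2 / (4 * eta)).
      { replace (2 * (2 * eta)) with (4 * eta) by ring. apply Rmult_le_compat_r; [left; apply Rinv_0_lt_compat; lra|lra]. }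
      replace (2 * eta / 2) with eta in H0 by field. lra.
    - unfold Y, SMT. rewrite DS_plus, DS_scal, DS_const, sMx.
      assert (0 <= rho ^ 2 / (4 * eta)) by (apply Rdiv_le_0_compat; [apply pow2_ge_0|lra]).
      assert (rho ^ 2 / (4 * eta) * (a * rsum (ny - 1) (fun j : nat => hn ny y (S j))) <= rho ^ 2 / (4 * eta) * (a * b)).
      { apply Rmult_le_compat_l; auto. apply Rmult_le_compat_l; lra. }
      lra. }
  assert (PX : X <= a * a * SM (fun i j => d_x x ex i (2*j+1)%nat ^ 2)).
  { unfold X, STM, SM, DS. rewrite rsum_exchange, (rsum_exchange nx).
    rewrite <- rsum_scal. apply rsum_le. intros j Hj.
    eapply Rle_trans; [|eapply Rle_trans].
    - apply Req_le. instantiate (1 := hh y j * rsum (nx - 1) (fun k => hn nx x (S k) * (ex (2 * S k)%nat (2*j+1)%nat) ^ 2)).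
      rewrite <- rsum_scal. apply rsum_ext; intros; ring.
    - apply Rmult_le_compat_l; [auto|]. apply (poincare1' nx x a Gx Ha (fun K => ex K (2*j+1)%nat)). apply Hex2; auto.
    - apply Req_le. rewrite <- !rsum_scal. apply rsum_ext; intros. unfold d_x. ring. }
  assert (PY : Y <= b * b * SM (fun i j => d_y y ey (2*i+1)%nat j ^ 2)).
  { unfold Y, SMT, SM, DS.
    rewrite <- rsum_scal. apply rsum_le. intros i Hi.
    eapply Rle_trans; [|eapply Rle_trans].
    - apply Req_le. instantiate (1 := hh x i * rsum (ny - 1) (fun k => hn ny y (S k) * (ey (2*i+1)%nat (2 * S k)%nat) ^ 2)).
      rewrite <- rsum_scal. apply rsum_ext; intros; ring.
    - apply Rmult_le_compat_l; [auto|]. apply (poincare1' ny y b Gy Hb (fun M => ey (2*i+1)%nat M)). apply Hey1; auto.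
    - apply Req_le. rewrite <- !rsum_scal. apply rsum_ext; intros. unfold d_y. ring. }
  assert (DX : SM (fun i j => d_x x ex i (2*j+1)%nat ^ 2) <= 2 / mu ^ 2 * P + 2 * rho ^ 2 * (a * b)).
  { eapply Rle_trans.
    - apply (DS_le _ _ _ _ _ (fun i j => 2 / mu ^ 2 * (Z1 i j ^ 2 + Z2 i j ^ 2) + 2 * rho ^ 2)); auto.
      intros i j Hi Hj. destruct (HC i j Hi Hj) as [C1 _]. destruct (B11 i j Hi Hj) as [b1 _].
      pose proof (sq_abs_le _ _ b1).
      pose proof (pw_A_sq lam mu (Z1 i j) (Z2 i j) Hlam Hmu) as HA. unfold Z1, Z2 in HA |- *.
      rewrite C1 in HA.
      set (u := d_x x ex i (2*j+1)%nat) in *. set (r := r11 (2*i+1)%nat (2*j+1)%nat) in *.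
      assert (u ^ 2 <= 2 * (u + r) ^ 2 + 2 * r ^ 2).
      { assert (0 <= (u + 2 * r) ^ 2) by apply pow2_ge_0.
        assert (2 * (u + r) ^ 2 + 2 * r ^ 2 - u ^ 2 = (u + 2 * r) ^ 2) by ring. lra. }
      assert (2 / mu ^ 2 * (z11 (2 * i + 1)%nat (2 * j + 1)%nat ^ 2 + z22 (2 * i + 1)%nat (2 * j + 1)%nat ^ 2)
        = 2 * ((z11 (2 * i + 1)%nat (2 * j + 1)%nat ^ 2 + z22 (2 * i + 1)%nat (2 * j + 1)%nat ^ 2) / mu ^ 2)) by (field; lra).
      lra.
    - unfold P, SM. rewrite DS_plus, DS_scal, DS_const, sMx, sMy. lra. }
  assert (DY : SM (fun i j => d_y y ey (2*i+1)%nat j ^ 2) <= 2 / mu ^ 2 * P + 2 * rho ^ 2 * (a * b)).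
  { eapply Rle_trans.
    - apply (DS_le _ _ _ _ _ (fun i j => 2 / mu ^ 2 * (Z1 i j ^ 2 + Z2 i j ^ 2) + 2 * rho ^ 2)); auto.
      intros i j Hi Hj. destruct (HC i j Hi Hj) as [_ C2]. destruct (B11 i j Hi Hj) as [_ b2].
      pose proof (sq_abs_le _ _ b2).
      pose proof (pw_A_sq lam mu (Z2 i j) (Z1 i j) Hlam Hmu) as HA. unfold Z1, Z2 in HA |- *.
      rewrite (Rplus_comm (z22 _ _) (z11 _ _)) in HA. rewrite C2 in HA.
      set (u := d_y y ey (2*i+1)%nat j) in *. set (r := r22 (2*i+1)%nat (2*j+1)%nat) in *.
      assert (u ^ 2 <= 2 * (u + r) ^ 2 + 2 * r ^ 2).
      { assert (0 <= (u + 2 * r) ^ 2) by apply pow2_ge_0.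
        assert (2 * (u + r) ^ 2 + 2 * r ^ 2 - u ^ 2 = (u + 2 * r) ^ 2) by ring. lra. }
      assert (2 / mu ^ 2 * (z11 (2 * i + 1)%nat (2 * j + 1)%nat ^ 2 + z22 (2 * i + 1)%nat (2 * j + 1)%nat ^ 2)
        = 2 * ((z22 (2 * i + 1)%nat (2 * j + 1)%nat ^ 2 + z11 (2 * i + 1)%nat (2 * j + 1)%nat ^ 2) / mu ^ 2)) by (field; lra).
      lra.
    - unfold P, SM. rewrite DS_plus, DS_scal, DS_const, sMx, sMy. lra. }
  assert (HQ0 : 0 <= Q).
  { unfold Q, ST. apply DS_nonneg; auto. intros; apply pow2_ge_0. }
  assert (HP1 : 0 <= SM (fun i j => Z1 i j ^ 2)) by (unfold SM; apply DS_nonneg; auto; intros; apply pow2_ge_0).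
  assert (HP2 : 0 <= SM (fun i j => Z2 i j ^ 2)) by (unfold SM; apply DS_nonneg; auto; intros; apply pow2_ge_0).
  assert (HPs : P = SM (fun i j => Z1 i j ^ 2) + SM (fun i j => Z2 i j ^ 2)) by (unfold P, SM; apply DS_plus).
  assert (HX0 : 0 <= X) by (unfold X, STM; apply DS_nonneg; auto; intros; apply pow2_ge_0).
  assert (HY0 : 0 <= Y) by (unfold Y, SMT; apply DS_nonneg; auto; intros; apply pow2_ge_0).
  set (U := 2 / mu ^ 2 * P + 2 * rho ^ 2 * (a * b)).
  assert (HXU : X <= a * a * U).
  { eapply Rle_trans; [apply PX|]. apply Rmult_le_compat_l; [nra|]. apply DX. }
  assert (HYU : Y <= b * b * U).
  { eapply Rle_trans; [apply PY|]. apply Rmult_le_compat_l; [nra|]. apply DY. }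
  assert (HXY : eta * (X + Y) <= eta * (L * U)).
  { apply Rmult_le_compat_l; [lra|]. unfold L, Lc. lra. }
  assert (Heq : eta * L * (2 / mu ^ 2) = k1 / 4).
  { unfold eta, etac. fold k1. fold L. assert (0 < mu ^ 2) by (apply pow_lt; lra). field. lra. }
  assert (HLU : eta * (L * U) = (eta * L * (2 / mu ^ 2)) * P + 2 * eta * L * rho ^ 2 * (a * b)) by (unfold U; ring).
  rewrite Heq in HLU.
  replace (/ (2 * mu) * Q) with (/ mu * Q * / 2) in R2 by (field; lra).
  replace (rho ^ 2 / (4 * eta) * (a * b)) with (/ (2 * eta) * rho ^ 2 * (a * b) * / 2) in R3, R4 by (field; lra).
  assert (MAIN : k1 / 4 * P + / mu * Q * / 2 <= (a * b) * rho ^ 2 * K0c a b lam mu).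
  { unfold K0c. fold k1 eta L. lra. }
  assert (K0pos : 0 <= K0c a b lam mu).
  { unfold K0c. fold k1 eta L. assert (0 < / k1) by (apply Rinv_0_lt_compat; lra).
    assert (0 < / (2 * eta)) by (apply Rinv_0_lt_compat; lra). nra. }
  assert (Hab : 0 < a * b) by nra.
  assert (Hr2 : 0 <= rho ^ 2) by apply pow2_ge_0.
  assert (HmQ : 0 <= / mu * Q * / 2).
  { assert (0 < / mu) by (apply Rinv_0_lt_compat; lra). nra. }
  assert (PB : P <= KPc a b lam mu * rho ^ 2).
  { apply Rmult_le_reg_l with (k1 / 4); [lra|].
    replace (k1 / 4 * (KPc a b lam mu * rho ^ 2)) with ((a * b) * rho ^ 2 * K0c a b lam mu)
      by (unfold KPc; fold k1; field; lra). lra. }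
  assert (QB : Q <= KQc a b lam mu * rho ^ 2).
  { assert (/ mu * Q * / 2 <= (a * b) * rho ^ 2 * K0c a b lam mu).
    { assert (0 <= k1 / 4 * P). { apply Rmult_le_pos; [lra|]. lra. } lra. }
    apply Rmult_le_reg_l with (/ mu * / 2); [apply Rmult_lt_0_compat; apply Rinv_0_lt_compat; lra|].
    replace (/ mu * / 2 * (KQc a b lam mu * rho ^ 2)) with ((a * b) * rho ^ 2 * K0c a b lam mu)
      by (unfold KQc; field; lra). lra. }
  assert (KPpos : 0 <= KPc a b lam mu).
  { unfold KPc. fold k1. apply Rdiv_le_0_compat; [|lra]. nra. }
  assert (KQpos : 0 <= KQc a b lam mu) by (unfold KQc; repeat apply Rmult_le_pos; lra).
  assert (UB : U <= (2 * KPc a b lam mu / mu ^ 2 + 2 * (a * b)) * rho ^ 2).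
  { unfold U. assert (0 < mu ^ 2) by (apply pow_lt; lra).
    assert (2 / mu ^ 2 * P <= 2 / mu ^ 2 * (KPc a b lam mu * rho ^ 2)).
    { apply Rmult_le_compat_l; auto. apply Rdiv_le_0_compat; lra. }
    assert (2 / mu ^ 2 * (KPc a b lam mu * rho ^ 2) = 2 * KPc a b lam mu / mu ^ 2 * rho ^ 2) by (field; lra).
    lra. }
  assert (XB : X <= KXc a b lam mu * rho ^ 2 /\ Y <= KXc a b lam mu * rho ^ 2).
  { unfold KXc. fold L. unfold L, Lc in *.
    assert (a * a * U <= a * a * ((2 * KPc a b lam mu / mu ^ 2 + 2 * (a * b)) * rho ^ 2)) by (apply Rmult_le_compat_l; nra).
    assert (b * b * U <= b * b * ((2 * KPc a b lam mu / mu ^ 2 + 2 * (a * b)) * rho ^ 2)) by (apply Rmult_le_compat_l; nra).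
    assert (0 <= (2 * KPc a b lam mu / mu ^ 2 + 2 * (a * b)) * rho ^ 2).
    { apply Rmult_le_pos; auto. assert (0 < mu ^ 2) by (apply pow_lt; lra).
      assert (0 <= 2 * KPc a b lam mu / mu ^ 2) by (apply Rdiv_le_0_compat; lra). lra. }
    split; nra. }
  assert (KXpos : 0 <= KXc a b lam mu * rho ^ 2) by lra.
  unfold Ken. fold P Q X Y. repeat split; try lra.
  - unfold Z1 in HP1, HP2, HPs. lra.
  - unfold Z2 in HP1, HP2, HPs. lra.
Qed.

End Energy2.

Definition smooth1 (f : R -> R) := forall k t, ex_derive (Derive_n f k) t.

Lemma smooth1_Dn f k : smooth1 f -> smooth1 (Derive_n f k).
Proof. intros H m t. apply (ex_derive_ext (Derive_n f (m + k))).
  - intros s. rewrite Derive_n_comp. reflexivity.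
  - apply H. Qed.

Lemma sum_zero_pow n (g : nat -> R) :
  sum_f_R0 (fun m => 0 ^ m / INR (fact m) * g m) n = g O.
Proof. induction n. - simpl. field. - cbn [sum_f_R0]. rewrite IHn. rewrite pow_i by lia. unfold Rdiv. ring. Qed.

Lemma TL f n x d M : smooth1 f -> 0 <= d ->
  (forall s, x < s < x + d -> Rabs (Derive_n f (S n) s) <= M) ->
  Rabs (f (x + d) - sum_f_R0 (fun m => d ^ m / INR (fact m) * Derive_n f m x) n)
    <= M * d ^ (S n) / INR (fact (S n)).
Proof. intros Hf Hd HM. destruct Hd as [Hd | Hd].
  - assert (Hex : forall t, x <= t <= x + d -> forall k, (k <= S n)%nat -> ex_derive_n f k t).
    { intros t _ k _. destruct k; simpl; auto. }
    destruct (Taylor_Lagrange f n x (x + d) ltac:(lra) Hex) as [z [Hz E]].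
    { replace (x + d - x) with d in E by ring. rewrite E.
      replace (sum_f_R0 (fun m : nat => d ^ m / INR (fact m) * Derive_n f m x) n +
        d ^ S n / INR (fact (S n)) * Derive_n f (S n) z -
        sum_f_R0 (fun m : nat => d ^ m / INR (fact m) * Derive_n f m x) n)
        with (d ^ S n / INR (fact (S n)) * Derive_n f (S n) z) by ring.
      rewrite Rabs_mult. assert (0 < d ^ S n / INR (fact (S n))).
      { apply Rdiv_lt_0_compat. apply pow_lt; lra. apply INR_fact_lt_0. }
      rewrite (Rabs_right (d ^ S n / INR (fact (S n)))) by lra.
      pose proof (HM z ltac:(lra)).
      replace (M * d ^ S n / INR (fact (S n))) with (d ^ S n / INR (fact (S n)) * M) by (field; apply INR_fact_neq_0).
      apply Rmult_le_compat_l; lra. }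
  - subst d. rewrite sum_zero_pow, Rplus_0_r. simpl Derive_n.
    replace (f x - f x) with 0 by ring. rewrite Rabs_R0. rewrite pow_i by lia. right. unfold Rdiv. ring. Qed.

Lemma abs_bnd X B : Rabs X <= B -> - B <= X <= B.
Proof. intros. split; [pose proof (Rabs_maj2 X)|pose proof (Rabs_le X)]; try lra.
  pose proof (Rle_abs X). lra. Qed.

Lemma bnd_abs X B : - B <= X <= B -> Rabs X <= B.
Proof. intros. apply Rabs_le. lra. Qed.

Section T.
Variable f : R -> R.
Hypothesis Hf : smooth1 f.
Let D1 := Derive_n f 1.
Let D2 := Derive_n f 2.
Let D3 := Derive_n f 3.

Lemma T2 x d M : 0 <= d -> (forall s, x < s < x + d -> Rabs (D3 s) <= M) ->
  - (M * d ^ 3 / 6) <= f (x + d) - f x - d * D1 x - d ^ 2 / 2 * D2 x <= M * d ^ 3 / 6.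
Proof. intros. pose proof (TL f 2 x d M Hf H H0). apply abs_bnd in H1.
  unfold D1, D2. simpl in *. lra. Qed.

Lemma T1 x d M : 0 <= d -> (forall s, x < s < x + d -> Rabs (D3 s) <= M) ->
  - (M * d ^ 2 / 2) <= D1 (x + d) - D1 x - d * D2 x <= M * d ^ 2 / 2.
Proof. intros. assert (H1 : forall m s, Derive_n (Derive_n f 1) m s = Derive_n f (m + 1) s) by (intros; apply Derive_n_comp).
  pose proof (TL (Derive_n f 1) 1 x d M (smooth1_Dn f 1 Hf) H) as T.
  specialize (T ltac:(intros s Hs; rewrite H1; apply H0; auto)).
  apply abs_bnd in T. cbn [sum_f_R0] in T. rewrite !H1 in T.
  unfold D1, D2. simpl in *. lra. Qed.

Lemma T0 x d M : 0 <= d -> (forall s, x < s < x + d -> Rabs (D3 s) <= M) ->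
  - (M * d) <= D2 (x + d) - D2 x <= M * d.
Proof. intros. assert (H1 : forall m s, Derive_n (Derive_n f 2) m s = Derive_n f (m + 2) s) by (intros; apply Derive_n_comp).
  pose proof (TL (Derive_n f 2) 0 x d M (smooth1_Dn f 2 Hf) H) as T.
  specialize (T ltac:(intros s Hs; rewrite H1; apply H0; auto)).
  apply abs_bnd in T. cbn [sum_f_R0] in T. rewrite !H1 in T.
  unfold D2. simpl in *. lra. Qed.

End T.

Lemma mul_bnd c X B : 0 <= c -> - B <= X <= B -> - (c * B) <= c * X <= c * B.
Proof. intros. split; nra. Qed.

Lemma MVT1 g x d M : smooth1 g -> 0 <= d -> (forall s, x < s < x + d -> Rabs (Derive_n g 1 s) <= M) ->
  Rabs (g (x + d) - g x) <= M * d.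
Proof. intros. pose proof (TL g 0 x d M H H0 H1). simpl in H2.
  replace (g (x + d) - g x) with (g (x + d) - 1 / 1 * g x) by field.
  replace (M * d) with (M * (d * 1) / 1) by field. auto. Qed.

Lemma div_bnd N D B : 0 < D -> Rabs N <= B * D -> Rabs (N / D) <= B.
Proof. intros. unfold Rdiv. rewrite Rabs_mult, Rabs_inv, (Rabs_right D) by lra.
  apply Rmult_le_reg_r with D; auto. rewrite Rmult_assoc, Rinv_l by lra. lra. Qed.

Section Core.
Variables f g : R -> R.
Hypotheses (Hf : smooth1 f) (Hg : smooth1 g).

Lemma core1d (c M t hp hm : R) : 0 <= M -> 0 <= hp -> 0 <= hm -> 0 < hp + hm ->
  (forall s, t - hm / 2 < s < t + hp / 2 -> Rabs (Derive_n f 3 s) <= M /\ Rabs (Derive_n g 1 s) <= M) ->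
  Rabs (((f (t + hp / 2) - hp ^ 2 / 8 * Derive_n f 2 (t + hp / 2) - c * g (t + hp / 2))
        - (f (t - hm / 2) - hm ^ 2 / 8 * Derive_n f 2 (t - hm / 2) - c * g (t - hm / 2)))
        / ((hm + hp) / 2) - Derive_n f 1 t)
  <= M * (hp ^ 2 + hm ^ 2) / 6 + Rabs c * M.
Proof. intros HM Hp Hm Hpm HB.
  set (d := hp / 2). set (e := hm / 2). set (s := t - e).
  assert (Hd : 0 <= d) by (unfold d; lra). assert (He : 0 <= e) by (unfold e; lra).
  assert (B1 : forall z, t < z < t + d -> Rabs (Derive_n f 3 z) <= M) by (intros; apply HB; unfold d, e in *; lra).
  assert (B2 : forall z, s < z < s + e -> Rabs (Derive_n f 3 z) <= M) by (intros; apply HB; unfold s, d, e in *; lra).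
  pose proof (T2 f Hf t d M Hd B1) as A1.
  pose proof (T0 f Hf t d M Hd B1) as A2.
  pose proof (T2 f Hf s e M He B2) as A3.
  pose proof (T1 f Hf s e M He B2) as A4.
  assert (A5 : Rabs (g (s + (d + e)) - g s) <= M * (d + e)).
  { apply MVT1; auto; [lra|]. intros; apply HB; unfold s, d, e in *; lra. }
  replace (s + e) with t in A3, A4 by (unfold s; ring).
  replace (s + (d + e)) with (t + d) in A5 by (unfold s; ring).
  replace (t + hp / 2) with (t + d) by auto. replace (t - hm / 2) with s by auto.
  replace ((hm + hp) / 2) with (d + e) by (unfold d, e; field).
  replace (hp ^ 2 / 8) with (d ^ 2 / 2) by (unfold d; field).
  replace (hm ^ 2 / 8) with (e ^ 2 / 2) by (unfold e; field).
  replace (M * (hp ^ 2 + hm ^ 2) / 6 + Rabs c * M) with (2 / 3 * M * (d ^ 2 + e ^ 2) + Rabs c * M) by (unfold d, e; field).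
  set (D1 := Derive_n f 1). set (D2 := Derive_n f 2).
  set (Num := (f (t + d) - d ^ 2 / 2 * D2 (t + d) - c * g (t + d) - (f s - e ^ 2 / 2 * D2 s - c * g s))).
  assert (Hde : 0 < d + e) by (unfold d, e; lra).
  replace (Num / (d + e) - D1 t) with ((Num - (d + e) * D1 t) / (d + e)) by (field; lra).
  apply div_bnd; auto.
  assert (HId : Num - (d + e) * D1 t =
    ((f (t + d) - f t - d * D1 t - d ^ 2 / 2 * D2 t) - d ^ 2 / 2 * (D2 (t + d) - D2 t))
    - (- (f t - f s - e * D1 s - e ^ 2 / 2 * D2 s) + e * (D1 t - D1 s - e * D2 s))
    - c * (g (t + d) - g s))  by (unfold Num; field).
  rewrite HId. apply bnd_abs.
  pose proof (mul_bnd (d ^ 2 / 2) _ _ ltac:(nra) A2) as A2'.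
  pose proof (mul_bnd e _ _ He A4) as A4'.
  assert (A5' : Rabs (c * (g (t + d) - g s)) <= Rabs c * (M * (d + e))).
  { rewrite Rabs_mult. apply Rmult_le_compat_l; auto. apply Rabs_pos. }
  apply abs_bnd in A5'.
  assert (0 <= M * (d * e * (d + e))) by (apply Rmult_le_pos; auto; apply Rmult_le_pos; nra).
  fold D1 D2 in A1, A2', A3, A4'.
  assert (E1 : d ^ 2 / 2 * (M * d) = M * d ^ 3 / 2) by field.
  assert (E2 : e * (M * e ^ 2 / 2) = M * e ^ 3 / 2) by field.
  assert (E3 : (2 / 3 * M * (d ^ 2 + e ^ 2) + Rabs c * M) * (d + e) =
     M * d ^ 3 / 6 + M * d ^ 3 / 2 + M * e ^ 3 / 6 + M * e ^ 3 / 2 + Rabs c * (M * (d + e))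
     + 2 / 3 * (M * (d * e * (d + e)))) by field.
  rewrite E1 in A2'. rewrite E2 in A4'. rewrite E3. split; lra. Qed.

Lemma dq1d (c M t d : R) : 0 <= M -> 0 < d ->
  (forall s, t - d < s < t + d -> Rabs (Derive_n f 3 s) <= M /\ Rabs (Derive_n g 1 s) <= M) ->
  Rabs (((f (t + d) - c * g (t + d)) - (f (t - d) - c * g (t - d))) / (2 * d) - Derive_n f 1 t)
  <= 2 * M * d ^ 2 + Rabs c * M.
Proof. intros HM Hd HB. set (s := t - d).
  assert (B1 : forall z, t < z < t + d -> Rabs (Derive_n f 3 z) <= M) by (intros; apply HB; lra).
  assert (B2 : forall z, s < z < s + d -> Rabs (Derive_n f 3 z) <= M) by (intros; apply HB; unfold s in *; lra).
  pose proof (T2 f Hf t d M ltac:(lra) B1) as A1.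
  pose proof (T2 f Hf s d M ltac:(lra) B2) as A3.
  pose proof (T1 f Hf s d M ltac:(lra) B2) as A4.
  pose proof (T0 f Hf s d M ltac:(lra) B2) as A2.
  assert (A5 : Rabs (g (s + (d + d)) - g s) <= M * (d + d)).
  { apply MVT1; auto; [lra|]. intros; apply HB; unfold s in *; lra. }
  replace (s + d) with t in A2, A3, A4 by (unfold s; ring).
  replace (s + (d + d)) with (t + d) in A5 by (unfold s; ring).
  replace (t - d) with s by auto.
  set (D1 := Derive_n f 1). set (D2 := Derive_n f 2).
  set (Num := (f (t + d) - c * g (t + d) - (f s - c * g s))).
  replace (Num / (2 * d) - D1 t) with ((Num - (2 * d) * D1 t) / (2 * d)) by (field; lra).
  apply div_bnd; [lra|].
  assert (HId : Num - (2 * d) * D1 t =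
    (f (t + d) - f t - d * D1 t - d ^ 2 / 2 * D2 t)
    + (f t - f s - d * D1 s - d ^ 2 / 2 * D2 s) - d * (D1 t - D1 s - d * D2 s)
    + d ^ 2 / 2 * (D2 t - D2 s)
    - c * (g (t + d) - g s)) by (unfold Num; field).
  rewrite HId. apply bnd_abs.
  pose proof (mul_bnd (d ^ 2 / 2) _ _ ltac:(nra) A2) as A2'.
  pose proof (mul_bnd d _ _ ltac:(lra) A4) as A4'.
  assert (A5' : Rabs (c * (g (t + d) - g s)) <= Rabs c * (M * (d + d))).
  { rewrite Rabs_mult. apply Rmult_le_compat_l; auto. apply Rabs_pos. }
  apply abs_bnd in A5'.
  assert (0 <= M * d ^ 3) by (apply Rmult_le_pos; auto; apply pow_le; lra).
  fold D1 D2 in A1, A2', A3, A4'.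
  assert (E1 : d ^ 2 / 2 * (M * d) = M * d ^ 3 / 2) by field.
  assert (E2 : d * (M * d ^ 2 / 2) = M * d ^ 3 / 2) by field.
  assert (E3 : (2 * M * d ^ 2 + Rabs c * M) * (2 * d) =
     M * d ^ 3 / 6 + M * d ^ 3 / 6 + M * d ^ 3 / 2 + M * d ^ 3 / 2 + Rabs c * (M * (d + d))
     + 8 / 3 * (M * d ^ 3)) by field.
  rewrite E1 in A2'. rewrite E2 in A4'. rewrite E3. split; lra. Qed.
End Core.

Lemma DnX (u : R -> R -> R) w Y k s :
  Derive_n (fun t => pd w u t Y) k s = pd (repeat true k ++ w) u s Y.
Proof. revert s. induction k; intros s; simpl; auto.
  unfold pdx. apply Derive_ext. intros t. apply IHk. Qed.

Lemma DnY (u : R -> R -> R) w X k s :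
  Derive_n (fun t => pd w u X t) k s = pd (repeat false k ++ w) u X s.
Proof. revert s. induction k; intros s; simpl; auto.
  unfold pdy. apply Derive_ext. intros t. apply IHk. Qed.

Lemma smooth1_X u w Y : smooth2 u -> smooth1 (fun t => pd w u t Y).
Proof. intros H k t. apply (ex_derive_ext (fun t => pd (repeat true k ++ w) u t Y)).
  - intros s. rewrite DnX. auto.
  - apply (H (repeat true k ++ w) t Y). Qed.

Lemma smooth1_Y u w X : smooth2 u -> smooth1 (fun t => pd w u X t).
Proof. intros H k t. apply (ex_derive_ext (fun t => pd (repeat false k ++ w) u X t)).
  - intros s. rewrite DnY. auto.
  - apply (H (repeat false k ++ w) X t). Qed.

Lemma Dn_zero f b : (forall t, 0 < t < b -> f t = 0) -> forall k t, 0 < t < b -> Derive_n f k t = 0.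
Proof. intros Hf k. induction k; intros t Ht; simpl; auto.
  rewrite (Derive_ext_loc _ (fun _ => 0)). apply Derive_const.
  assert (He : 0 < Rmin t (b - t)) by (apply Rmin_glb_lt; lra).
  exists (mkposreal _ He). intros s Hs. apply IHk.
  change (Rabs (s - t) < Rmin t (b - t)) in Hs. apply Rabs_def2 in Hs.
  pose proof (Rmin_l t (b - t)). pose proof (Rmin_r t (b - t)). lra. Qed.

Lemma cont_eps (F : R -> R -> R) X Y :
  continuous (fun p : R * R => F (fst p) (snd p)) (X, Y) ->
  forall eps, 0 < eps -> exists delta, 0 < delta /\ forall X' Y', Rabs (X' - X) < delta -> Rabs (Y' - Y) < delta ->
    Rabs (F X' Y' - F X Y) < eps.
Proof. intros HC eps He. unfold continuous in HC.
  apply (proj1 (filterlim_locally _ _)) with (eps := mkposreal _ He) in HC.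
  destruct HC as [d Hd]. exists d. split; [apply cond_pos|]. intros X' Y' H1 H2.
  apply (Hd (X', Y')). split; [exact H1|exact H2]. Qed.

Lemma eps_zero z K : 0 <= K -> (forall eps, 0 < eps -> Rabs z <= eps * K) -> z = 0.
Proof. intros HK H. destruct (Req_dec z 0); auto. exfalso.
  assert (Hz : 0 < Rabs z) by (apply Rabs_pos_lt; auto).
  set (eps := Rabs z / (2 * (K + 1))).
  assert (0 < eps) by (unfold eps; apply Rdiv_lt_0_compat; lra).
  pose proof (H eps H1). unfold eps in H2.
  assert (Rabs z / (2 * (K + 1)) * K < Rabs z).
  { apply Rmult_lt_reg_r with (2 * (K + 1)); [lra|].
    replace (Rabs z / (2 * (K + 1)) * K * (2 * (K + 1))) with (Rabs z * K) by (field; lra). nra. }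
  lra. Qed.

Lemma closure_eq (F G H : R -> R -> R) mu a b X Y : 0 < a -> 0 < b ->
  continuous (fun p : R * R => F (fst p) (snd p)) (X, Y) ->
  continuous (fun p : R * R => G (fst p) (snd p)) (X, Y) ->
  continuous (fun p : R * R => H (fst p) (snd p)) (X, Y) ->
  0 <= X <= a -> 0 <= Y <= b ->
  (forall X' Y', 0 < X' < a -> 0 < Y' < b -> F X' Y' = mu * (G X' Y' + H X' Y')) ->
  F X Y = mu * (G X Y + H X Y).
Proof. intros Ha Hb CF CG CH HX HY Heq.
  apply Rminus_diag_uniq. apply (eps_zero _ (1 + 2 * Rabs mu)); [pose proof (Rabs_pos mu); lra|].
  intros eps He.
  destruct (cont_eps F X Y CF eps He) as [d1 [Hd1 P1]].
  destruct (cont_eps G X Y CG eps He) as [d2 [Hd2 P2]].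
  destruct (cont_eps H X Y CH eps He) as [d3 [Hd3 P3]].
  set (d := Rmin d1 (Rmin d2 d3)).
  assert (Hd : 0 < d) by (unfold d; repeat apply Rmin_glb_lt; auto).
  assert (dd1 : d <= d1) by apply Rmin_l.
  assert (dd2 : d <= d2) by (eapply Rle_trans; [apply Rmin_r|apply Rmin_l]).
  assert (dd3 : d <= d3) by (eapply Rle_trans; [apply Rmin_r|apply Rmin_r]).
  set (s := Rmin (1/2) (d / (2 * (a + b)))).
  assert (Hs0 : 0 < s) by (unfold s; apply Rmin_glb_lt; [lra|apply Rdiv_lt_0_compat; lra]).
  assert (Hs1 : s <= 1/2) by apply Rmin_l.
  assert (Hs2 : s * (2 * (a + b)) <= d).
  { assert (s <= d / (2 * (a + b))) by apply Rmin_r.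
    apply Rmult_le_compat_r with (r := 2 * (a + b)) in H0; [|lra].
    replace (d / (2 * (a + b)) * (2 * (a + b))) with d in H0 by (field; lra). lra. }
  set (X' := X + s * (a / 2 - X)). set (Y' := Y + s * (b / 2 - Y)).
  assert (HX' : 0 < X' < a) by (unfold X'; split; nra).
  assert (HY' : 0 < Y' < b) by (unfold Y'; split; nra).
  assert (DX : Rabs (X' - X) < d).
  { unfold X'. replace (X + s * (a / 2 - X) - X) with (s * (a / 2 - X)) by ring.
    rewrite Rabs_mult, Rabs_right by lra.
    assert (Rabs (a / 2 - X) <= a / 2 + a) by (apply Rabs_le; lra). nra. }
  assert (DY : Rabs (Y' - Y) < d).
  { unfold Y'. replace (Y + s * (b / 2 - Y) - Y) with (s * (b / 2 - Y)) by ring.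
    rewrite Rabs_mult, Rabs_right by lra.
    assert (Rabs (b / 2 - Y) <= b / 2 + b) by (apply Rabs_le; lra). nra. }
  pose proof (P1 X' Y' ltac:(lra) ltac:(lra)). pose proof (P2 X' Y' ltac:(lra) ltac:(lra)).
  pose proof (P3 X' Y' ltac:(lra) ltac:(lra)). rewrite Heq in H0 by auto.
  replace (F X Y - mu * (G X Y + H X Y)) with
    (- (mu * (G X' Y' + H X' Y') - F X Y) + mu * (G X' Y' - G X Y) + mu * (H X' Y' - H X Y)) by ring.
  eapply Rle_trans; [apply Rabs_triang|]. eapply Rle_trans; [apply Rplus_le_compat_r; apply Rabs_triang|].
  rewrite Rabs_Ropp, !Rabs_mult.
  assert (Rabs mu * Rabs (G X' Y' - G X Y) <= Rabs mu * eps) by (apply Rmult_le_compat_l; [apply Rabs_pos|lra]).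
  assert (Rabs mu * Rabs (H X' Y' - H X Y) <= Rabs mu * eps) by (apply Rmult_le_compat_l; [apply Rabs_pos|lra]).
  lra. Qed.

Lemma Dn_const0 k t : Derive_n (fun _ => 0) k t = 0.
Proof. revert t. induction k; intros; simpl; auto. rewrite (Derive_ext _ (fun _ => 0)) by auto. apply Derive_const. Qed.

Lemma smooth1_0 : smooth1 (fun _ => 0).
Proof. intros k t. apply (ex_derive_ext (fun _ => 0)). intros; rewrite Dn_const0; auto. apply ex_derive_const. Qed.

Section Col.
Variables (n : nat) (y : nat -> R) (b : R).
Hypothesis G : is_grid n y b.
Hypothesis Hb : 0 < b.

Lemma hh_le_hmax j : (j < n)%nat -> hh y j <= hmax n y.
Proof. intros. apply rmax_ge. auto. Qed.

Lemma mid_range k : (k < n)%nat -> 0 < (y k + y (S k)) / 2 < b.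
Proof. intros. pose proof (grid_range n y b G k ltac:(lia)). pose proof (grid_range n y b G (S k) ltac:(lia)).
  pose proof (hh_pos n y b G k H). unfold hh in H2. lra. Qed.

Lemma col1d (f : R -> R) (Hf : smooth1 f) M (HM : 0 <= M)
  (HD3 : forall t, 0 < t < b -> Rabs (Derive_n f 3 t) <= M)
  (Hf0 : f (y O) = 0) (Hfn : f (y n) = 0) (phi : nat -> R)
  (Hp0 : phi O = 0) (Hpn : phi (2 * n)%nat = 0)
  (Hpk : forall k, (k < n)%nat -> phi (2 * k + 1)%nat =
      f ((y k + y (S k)) / 2) - (hh y k) ^ 2 / 8 * Derive_n f 2 ((y k + y (S k)) / 2)) :
  forall j, (j <= n)%nat -> Rabs (Dq n y phi j - Derive_n f 1 (y j)) <= M * (hmax n y) ^ 2 / 3.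
Proof. intros j Hj. pose proof (grid_n n y b G Hb) as Hn.
  assert (HB : forall hp hm, 0 <= hp -> 0 <= hm -> 0 < hp + hm -> hp <= hmax n y -> hm <= hmax n y ->
    (forall s, y j - hm / 2 < s < y j + hp / 2 -> 0 < s < b) ->
    Dq n y phi j = ((f (y j + hp / 2) - hp ^ 2 / 8 * Derive_n f 2 (y j + hp / 2) - 0 * (fun _ => 0) (y j + hp / 2))
        - (f (y j - hm / 2) - hm ^ 2 / 8 * Derive_n f 2 (y j - hm / 2) - 0 * (fun _ => 0) (y j - hm / 2)))
        / ((hm + hp) / 2) ->
    Rabs (Dq n y phi j - Derive_n f 1 (y j)) <= M * (hmax n y) ^ 2 / 3).
  { intros hp hm H1 H2 H3 H4 H5 H6 E. rewrite E. eapply Rle_trans.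
    - apply (core1d f (fun _ => 0) Hf smooth1_0 0 M (y j) hp hm HM H1 H2 H3).
      intros s Hs. split; [apply HD3; auto|]. rewrite Dn_const0, Rabs_R0. auto.
    - rewrite Rabs_R0. assert (hp ^ 2 <= hmax n y ^ 2) by (apply pow_incr; lra).
      assert (hm ^ 2 <= hmax n y ^ 2) by (apply pow_incr; lra). nra. }
  destruct (Nat.eq_dec j 0) as [->|Hj0]; [|destruct (Nat.eq_dec j n) as [->|Hjn]].
  - pose proof (hh_pos n y b G 0 ltac:(lia)). pose proof (hh_le_hmax 0 ltac:(lia)).
    apply (HB (hh y 0) 0); try lra.
    + intros s Hs. pose proof (mid_range 0 ltac:(lia)). destruct G as [G0 _]. unfold hh in *. lra.
    + unfold Dq. simpl Nat.eqb. cbv iota. rewrite Hp0. pose proof (Hpk 0%nat ltac:(lia)) as Hk0. simpl (2 * 0 + 1)%nat in Hk0. rewrite Hk0.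
      replace (y 0%nat - 0 / 2) with (y 0%nat) by field. rewrite Hf0.
      replace (y 0%nat + hh y 0 / 2) with ((y 0%nat + y 1%nat) / 2) by (unfold hh; field).
      unfold hn. simpl Nat.eqb. cbv iota. field. lra.
  - pose proof (hh_pos n y b G (n-1) ltac:(lia)). pose proof (hh_le_hmax (n-1) ltac:(lia)).
    apply (HB 0 (hh y (n-1))); try lra.
    + intros s Hs. pose proof (mid_range (n-1) ltac:(lia)). replace (S (n-1)) with n in H1 by lia.
      destruct G as [_ [Gn _]]. unfold hh in *. replace (S (n-1)) with n in * by lia. lra.
    + unfold Dq. destruct (Nat.eqb_spec n 0); [lia|]. rewrite Nat.eqb_refl.
      rewrite Hpn. replace (2 * n - 1)%nat with (2 * (n - 1) + 1)%nat by lia. rewrite (Hpk (n-1)%nat) by lia.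
      replace (S (n-1)) with n by lia.
      replace (y n + 0 / 2) with (y n) by field. rewrite Hfn.
      replace (y n - hh y (n - 1) / 2) with ((y (n - 1)%nat + y n) / 2)
        by (unfold hh; replace (S (n-1)) with n by lia; field).
      unfold hn. destruct (Nat.eqb_spec n 0); [lia|]. rewrite Nat.eqb_refl. field. lra.
  - pose proof (hh_pos n y b G (j-1) ltac:(lia)). pose proof (hh_le_hmax (j-1) ltac:(lia)).
    pose proof (hh_pos n y b G j ltac:(lia)). pose proof (hh_le_hmax j ltac:(lia)).
    apply (HB (hh y j) (hh y (j-1))); try lra.
    + intros s Hs. pose proof (mid_range (j-1) ltac:(lia)). pose proof (mid_range j ltac:(lia)).
      replace (S (j-1)) with j in H3 by lia. unfold hh in *. replace (S (j-1)) with j in * by lia. lra.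
    + unfold Dq. destruct (Nat.eqb_spec j 0); [lia|]. destruct (Nat.eqb_spec j n); [lia|].
      replace (2 * j - 1)%nat with (2 * (j - 1) + 1)%nat by lia. rewrite !Hpk by lia.
      replace (S (j-1)) with j by lia.
      replace (y j - hh y (j - 1) / 2) with ((y (j - 1)%nat + y j) / 2)
        by (unfold hh; replace (S (j-1)) with j by lia; field).
      replace (y j + hh y j / 2) with ((y j + y (S j)) / 2) by (unfold hh; field).
      rewrite (hn_int n y) by lia. field. lra. Qed.

End Col.

Definition Ux (nx ny : nat) (x y : nat -> R) (u : R -> R -> R) (K M : nat) : R :=
  if orb (orb (Nat.eqb K 0) (Nat.eqb K (2 * nx))) (orb (Nat.eqb M 0) (Nat.eqb M (2 * ny))) then 0
  else tux x y u K M.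
Definition Uy (nx ny : nat) (x y : nat -> R) (u : R -> R -> R) (K M : nat) : R :=
  if orb (orb (Nat.eqb K 0) (Nat.eqb K (2 * nx))) (orb (Nat.eqb M 0) (Nat.eqb M (2 * ny))) then 0
  else tuy x y u K M.

Lemma grid_lt n x a : is_grid n x a -> forall k m, (k < m)%nat -> (m <= n)%nat -> x k < x m.
Proof. intros G k m Hkm Hm. destruct G as [G0 [Gn Gi]] eqn:EG.
  pose proof (Gi k ltac:(lia)). pose proof (grid_le n x a G (S k) m ltac:(lia) Hm). lra. Qed.

Lemma grid_int n x a : is_grid n x a -> forall i, (1 <= i)%nat -> (i <= n - 1)%nat -> 0 < x i < a.
Proof. intros G i H1 H2. destruct G as [G0 [Gn Gi]] eqn:EG. split.
  - rewrite <- G0. apply (grid_lt n x a G); lia.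
  - rewrite <- Gn. apply (grid_lt n x a G); lia. Qed.

Section Main.
Variables (a b lam mu : R) (nx ny : nat) (x y : nat -> R).
Hypotheses (Ha : 0 < a) (Hb : 0 < b) (Hlam : 0 < lam) (Hmu : 0 < mu).
Hypothesis Gx : is_grid nx x a.
Hypothesis Gy : is_grid ny y b.
Variables ux uy s11 s12 s22 fx fy : R -> R -> R.
Hypotheses (Su : smooth2 ux) (Sv : smooth2 uy) (S11 : smooth2 s11) (S12 : smooth2 s12) (S22 : smooth2 s22).
Hypothesis EL : elasticity_solution a b lam mu ux uy s11 s12 s22 fx fy.
Variables Mu Ms : R.
Hypotheses (Bu : W3inf_bound a b ux Mu) (Bv : W3inf_bound a b uy Mu)
  (B11 : W3inf_bound a b s11 Ms) (B12 : W3inf_bound a b s12 Ms) (B22 : W3inf_bound a b s22 Ms).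

Lemma Mu_nn : 0 <= Mu.
Proof. pose proof (Bu nil ltac:(simpl; lia) (a/2) (b/2) ltac:(lra) ltac:(lra)). pose proof (Rabs_pos (pd nil ux (a/2) (b/2))). lra. Qed.
Lemma Ms_nn : 0 <= Ms.
Proof. pose proof (B11 nil ltac:(simpl; lia) (a/2) (b/2) ltac:(lra) ltac:(lra)). pose proof (Rabs_pos (pd nil s11 (a/2) (b/2))). lra. Qed.

Lemma xr i : (i <= nx)%nat -> 0 <= x i <= a.
Proof. apply (grid_range nx x a Gx). Qed.
Lemma yr j : (j <= ny)%nat -> 0 <= y j <= b.
Proof. apply (grid_range ny y b Gy). Qed.

Lemma ux_bdry X Y : 0 <= X <= a -> 0 <= Y <= b -> (X = 0 \/ X = a \/ Y = 0 \/ Y = b) -> ux X Y = 0.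
Proof. intros HX HY H. destruct EL as [_ [E1 E2]].
  destruct H as [H|[H|[H|H]]]; subst; [apply E2|apply E2|apply E1|apply E1]; auto. Qed.
Lemma uy_bdry X Y : 0 <= X <= a -> 0 <= Y <= b -> (X = 0 \/ X = a \/ Y = 0 \/ Y = b) -> uy X Y = 0.
Proof. intros HX HY H. destruct EL as [_ [E1 E2]].
  destruct H as [H|[H|[H|H]]]; subst; [apply E2|apply E2|apply E1|apply E1]; auto. Qed.

Lemma D3y_ux X t : 0 <= X <= a -> 0 < t < b -> Rabs (Derive_n (fun s => ux X s) 3 t) <= Mu.
Proof. intros HX Ht. destruct (Req_dec X 0) as [E|E]; [|destruct (Req_dec X a) as [E'|E']].
  - rewrite (Dn_zero _ b) by (auto; intros; apply ux_bdry; lra). rewrite Rabs_R0. apply Mu_nn.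
  - rewrite (Dn_zero _ b) by (auto; intros; apply ux_bdry; lra). rewrite Rabs_R0. apply Mu_nn.
  - replace (Derive_n (fun s => ux X s) 3 t) with (pd (repeat false 3 ++ nil) ux X t)
      by (symmetry; apply (DnY ux nil X 3 t)).
    apply Bu; simpl; auto; lra. Qed.

Lemma D3x_uy Y t : 0 <= Y <= b -> 0 < t < a -> Rabs (Derive_n (fun s => uy s Y) 3 t) <= Mu.
Proof. intros HY Ht. destruct (Req_dec Y 0) as [E|E]; [|destruct (Req_dec Y b) as [E'|E']].
  - rewrite (Dn_zero _ a) by (auto; intros; apply uy_bdry; lra). rewrite Rabs_R0. apply Mu_nn.
  - rewrite (Dn_zero _ a) by (auto; intros; apply uy_bdry; lra). rewrite Rabs_R0. apply Mu_nn.
  - replace (Derive_n (fun s => uy s Y) 3 t) with (pd (repeat true 3 ++ nil) uy t Y)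
      by (symmetry; apply (DnX uy nil Y 3 t)).
    apply Bv; simpl; auto; lra. Qed.

Definition Yc j := (y j + y (S j)) / 2.
Definition Xc i := (x i + x (S i)) / 2.

Lemma Yc_range j : (j < ny)%nat -> 0 < Yc j < b.
Proof. intros. apply (mid_range ny y b Gy). auto. Qed.
Lemma Xc_range i : (i < nx)%nat -> 0 < Xc i < a.
Proof. intros. apply (mid_range nx x a Gx). auto. Qed.

Lemma V1 i j : (i <= nx)%nat -> (j < ny)%nat ->
  Ux nx ny x y ux (2 * i)%nat (2 * j + 1)%nat
  = ux (x i) (Yc j) - (hh y j) ^ 2 / 8 * Derive_n (fun t => ux (x i) t) 2 (Yc j).
Proof. intros Hi Hj. pose proof (xr i Hi). pose proof (Yc_range j Hj). unfold Ux.
  destruct (Nat.eqb_spec (2 * i) 0); [|destruct (Nat.eqb_spec (2 * i) (2 * nx))].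
  - replace i with 0%nat by lia. simpl orb. cbv iota. destruct Gx as [G0 _]. rewrite G0.
    assert (Z : Derive_n (fun t => ux 0 t) 2 (Yc j) = 0) by (apply (Dn_zero _ b); [intros; apply ux_bdry; lra | auto]).
    rewrite Z, ux_bdry by lra. ring.
  - replace i with nx by lia. simpl orb. cbv iota. destruct Gx as [G0 [Gn _]]. rewrite Gn.
    assert (Z : Derive_n (fun t => ux a t) 2 (Yc j) = 0) by (apply (Dn_zero _ b); [intros; apply ux_bdry; lra | auto]).
    rewrite Z, ux_bdry by lra. ring.
  - destruct (Nat.eqb_spec (2 * j + 1) 0); [lia|]. destruct (Nat.eqb_spec (2 * j + 1) (2 * ny)); [lia|].
    simpl orb. cbv iota. unfold tux. rewrite xh_even, xh_odd, div2_odd. fold (Yc j).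
    replace (Derive_n (fun t => ux (x i) t) 2 (Yc j)) with (pd (repeat false 2 ++ nil) ux (x i) (Yc j))
      by (symmetry; apply (DnY ux nil (x i) 2 (Yc j))). reflexivity. Qed.

Lemma V3 i j : (i < nx)%nat -> (j <= ny)%nat ->
  Uy nx ny x y uy (2 * i + 1)%nat (2 * j)%nat
  = uy (Xc i) (y j) - (hh x i) ^ 2 / 8 * Derive_n (fun t => uy t (y j)) 2 (Xc i).
Proof. intros Hi Hj. pose proof (yr j Hj). pose proof (Xc_range i Hi). unfold Uy.
  destruct (Nat.eqb_spec (2 * i + 1) 0); [lia|]. destruct (Nat.eqb_spec (2 * i + 1) (2 * nx)); [lia|].
  destruct (Nat.eqb_spec (2 * j) 0); [|destruct (Nat.eqb_spec (2 * j) (2 * ny))].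
  - replace j with 0%nat by lia. simpl orb. cbv iota. destruct Gy as [G0 _]. rewrite G0.
    assert (Z : Derive_n (fun t => uy t 0) 2 (Xc i) = 0) by (apply (Dn_zero _ a); [intros; apply uy_bdry; lra | auto]).
    rewrite Z, uy_bdry by lra. ring.
  - replace j with ny by lia. simpl orb. cbv iota. destruct Gy as [G0 [Gn _]]. rewrite Gn.
    assert (Z : Derive_n (fun t => uy t b) 2 (Xc i) = 0) by (apply (Dn_zero _ a); [intros; apply uy_bdry; lra | auto]).
    rewrite Z, uy_bdry by lra. ring.
  - simpl orb. cbv iota. unfold tuy. rewrite xh_even, xh_odd, div2_odd. fold (Xc i).
    replace (Derive_n (fun t => uy t (y j)) 2 (Xc i)) with (pd (repeat true 2 ++ nil) uy (Xc i) (y j))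
      by (symmetry; apply (DnX uy nil (y j) 2 (Xc i))). reflexivity. Qed.

Lemma RB12y i j : (i <= nx)%nat -> (j <= ny)%nat ->
  Rabs (D_y ny y (Ux nx ny x y ux) (2 * i)%nat j - pdy ux (x i) (y j)) <= Mu * (hmax ny y) ^ 2 / 3.
Proof. intros Hi Hj. pose proof (xr i Hi) as HX. pose proof Gy as [G0 [Gn _]].
  apply (col1d ny y b Gy Hb (fun t => ux (x i) t) (smooth1_Y ux nil (x i) Su) Mu Mu_nn); auto.
  - intros t Ht. apply D3y_ux; auto.
  - rewrite G0. apply ux_bdry; lra.
  - rewrite Gn. apply ux_bdry; lra.
  - unfold Ux. rewrite (Nat.eqb_refl 0), !Bool.orb_true_r. auto.
  - unfold Ux. rewrite Nat.eqb_refl, !Bool.orb_true_r. auto.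
  - intros k Hk. apply V1; auto. Qed.

Lemma RB12x i j : (i <= nx)%nat -> (j <= ny)%nat ->
  Rabs (D_x nx x (Uy nx ny x y uy) i (2 * j)%nat - pdx uy (x i) (y j)) <= Mu * (hmax nx x) ^ 2 / 3.
Proof. intros Hi Hj. pose proof (yr j Hj) as HY. pose proof Gx as [G0 [Gn _]].
  apply (col1d nx x a Gx Ha (fun t => uy t (y j)) (smooth1_X uy nil (y j) Sv) Mu Mu_nn); auto.
  - intros t Ht. apply D3x_uy; auto.
  - rewrite G0. apply uy_bdry; lra.
  - rewrite Gn. apply uy_bdry; lra.
  - unfold Uy. simpl. auto.
  - unfold Uy. rewrite Nat.eqb_refl, Bool.orb_true_r. auto.
  - intros k Hk. apply V3; auto. Qed.

Lemma sig12_node i j : (i <= nx)%nat -> (j <= ny)%nat ->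
  s12 (x i) (y j) = mu * (pdy ux (x i) (y j) + pdx uy (x i) (y j)).
Proof. intros Hi Hj. apply (closure_eq s12 (pdy ux) (pdx uy) mu a b); auto.
  - apply (S12 nil).
  - apply (Su (false :: nil)).
  - apply (Sv (true :: nil)).
  - apply xr; auto.
  - apply yr; auto.
  - intros X' Y' H1 H2. destruct EL as [E _]. apply (E X' Y' H1 H2). Qed.

Lemma A1_bnd C1 C2 B : 0 <= B -> Rabs C1 <= B -> Rabs C2 <= B ->
  Rabs (/ (2 * mu) * (C1 - lam / (2 * lam + 2 * mu) * (C1 + C2))) <= B / mu.
Proof. intros HB H1 H2. set (c := lam / (2 * lam + 2 * mu)).
  assert (Hc : 0 <= c <= 1/2).
  { unfold c. split. apply Rdiv_le_0_compat; lra. apply Rmult_le_reg_r with (2*lam+2*mu); [lra|].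
    unfold Rdiv. rewrite Rmult_assoc, Rinv_l by lra. lra. }
  apply abs_bnd in H1. apply abs_bnd in H2.
  rewrite Rabs_mult, Rabs_right by (left; apply Rinv_0_lt_compat; lra).
  replace (B / mu) with (/ (2 * mu) * (2 * B)) by (field; lra).
  apply Rmult_le_compat_l; [left; apply Rinv_0_lt_compat; lra|]. apply bnd_abs. split; nra. Qed.

Let hx := hmax nx x.
Let ly := hmax ny y.

Lemma hx_ge i : (i < nx)%nat -> 0 < hh x i <= hx.
Proof. intros. split. apply (hh_pos nx x a Gx); auto. apply rmax_ge; auto. Qed.
Lemma ly_ge j : (j < ny)%nat -> 0 < hh y j <= ly.
Proof. intros. split. apply (hh_pos ny y b Gy); auto. apply rmax_ge; auto. Qed.

Lemma sq_le u v : 0 <= u <= v -> u ^ 2 <= v ^ 2.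
Proof. intros. apply pow_incr. auto. Qed.

Lemma RB11 i j : (i < nx)%nat -> (j < ny)%nat ->
  Rabs (d_x x (Ux nx ny x y ux) i (2 * j + 1)%nat
        - / (2 * mu) * (tsig_kk x y s11 (2 * i + 1)%nat (2 * j + 1)%nat
             - lam / (2 * lam + 2 * mu) * (tsig_kk x y s11 (2 * i + 1)%nat (2 * j + 1)%nat
                                           + tsig_kk x y s22 (2 * i + 1)%nat (2 * j + 1)%nat)))
  <= (hx ^ 2 + ly ^ 2) * Mu + (hx ^ 2 + ly ^ 2) * Ms / mu.
Proof. intros Hi Hj. pose proof (Xc_range i Hi) as HXi. pose proof (Yc_range j Hj) as HY.
  pose proof (hx_ge i Hi) as Hhi. pose proof (ly_ge j Hj) as Hlj.
  pose proof Mu_nn as HMu. pose proof Ms_nn as HMs.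
  set (Xi := Xc i). set (Y := Yc j). set (d := hh x i / 2). set (cc := (hh y j) ^ 2 / 8).
  set (f := fun t => ux t Y). set (g := fun t => pd (false :: false :: nil) ux t Y).
  assert (Hxr : forall s, Xi - d < s < Xi + d -> 0 < s < a).
  { intros s Hs. pose proof (xr i ltac:(lia)). pose proof (xr (S i) ltac:(lia)).
    unfold Xi, Xc, d, hh in *. lra. }
  assert (E1 : d_x x (Ux nx ny x y ux) i (2 * j + 1)%nat =
     ((f (Xi + d) - cc * g (Xi + d)) - (f (Xi - d) - cc * g (Xi - d))) / (2 * d)).
  { unfold d_x, dq. replace (2 * i + 2)%nat with (2 * S i)%nat by lia.
    rewrite (V1 (S i) j), (V1 i j) by lia. fold Y.
    replace (Xi + d) with (x (S i)) by (unfold Xi, Xc, d, hh; field).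
    replace (Xi - d) with (x i) by (unfold Xi, Xc, d, hh; field).
    replace (2 * d) with (hh x i) by (unfold d; field).
    unfold f, g, cc.
    replace (Derive_n (fun t => ux (x (S i)) t) 2 Y) with (pd (repeat false 2 ++ nil) ux (x (S i)) Y)
      by (symmetry; apply (DnY ux nil (x (S i)) 2 Y)).
    replace (Derive_n (fun t => ux (x i) t) 2 Y) with (pd (repeat false 2 ++ nil) ux (x i) Y)
      by (symmetry; apply (DnY ux nil (x i) 2 Y)). reflexivity. }
  pose proof (dq1d f g (smooth1_X ux nil Y Su) (smooth1_X ux (false :: false :: nil) Y Su) cc Mu Xi d HMu
     ltac:(unfold d; lra)) as DQ.
  specialize (DQ ltac:(intros s Hs; pose proof (Hxr s Hs); split;
     [ replace (Derive_n f 3 s) with (pd (repeat true 3 ++ nil) ux s Y) by (symmetry; apply (DnX ux nil Y 3 s));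
       apply Bu; simpl; auto; lia
     | change (Rabs (pd (true :: false :: false :: nil) ux s Y) <= Mu); apply Bu; simpl; auto; lia])).
  assert (ELq : / (2 * mu) * (s11 Xi Y - lam / (2 * lam + 2 * mu) * (s11 Xi Y + s22 Xi Y)) = pdx ux Xi Y).
  { destruct EL as [E _]. apply (E Xi Y); auto. }
  assert (T11 : tsig_kk x y s11 (2 * i + 1)%nat (2 * j + 1)%nat =
     s11 Xi Y - ((hh x i) ^ 2 / 8 * pd (true :: true :: nil) s11 Xi Y + cc * pd (false :: false :: nil) s11 Xi Y)).
  { unfold tsig_kk. rewrite !xh_odd, !div2_odd. fold (Xc i) (Yc j). fold Xi Y. unfold cc. simpl. ring. }
  assert (T22 : tsig_kk x y s22 (2 * i + 1)%nat (2 * j + 1)%nat =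
     s22 Xi Y - ((hh x i) ^ 2 / 8 * pd (true :: true :: nil) s22 Xi Y + cc * pd (false :: false :: nil) s22 Xi Y)).
  { unfold tsig_kk. rewrite !xh_odd, !div2_odd. fold (Xc i) (Yc j). fold Xi Y. unfold cc. simpl. ring. }
  set (C1 := (hh x i) ^ 2 / 8 * pd (true :: true :: nil) s11 Xi Y + cc * pd (false :: false :: nil) s11 Xi Y) in T11.
  set (C2 := (hh x i) ^ 2 / 8 * pd (true :: true :: nil) s22 Xi Y + cc * pd (false :: false :: nil) s22 Xi Y) in T22.
  assert (HC : forall s, W3inf_bound a b s Ms ->
     Rabs ((hh x i) ^ 2 / 8 * pd (true :: true :: nil) s Xi Y + cc * pd (false :: false :: nil) s Xi Y)
       <= (hx ^ 2 + ly ^ 2) / 8 * Ms).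
  { intros s Bs. eapply Rle_trans; [apply Rabs_triang|]. rewrite !Rabs_mult.
    pose proof (Bs (true :: true :: nil) ltac:(simpl; lia) Xi Y HXi HY).
    pose proof (Bs (false :: false :: nil) ltac:(simpl; lia) Xi Y HXi HY).
    assert (hh x i ^ 2 <= hx ^ 2) by (apply sq_le; lra).
    assert (hh y j ^ 2 <= ly ^ 2) by (apply sq_le; lra).
    rewrite (Rabs_right (hh x i ^ 2 / 8)) by (apply Rle_ge; apply Rdiv_le_0_compat; [apply pow2_ge_0|lra]).
    rewrite (Rabs_right cc) by (apply Rle_ge; unfold cc; apply Rdiv_le_0_compat; [apply pow2_ge_0|lra]).
    assert (Hcc : cc <= ly ^ 2 / 8) by (unfold cc; lra).
    assert (0 <= hh x i ^ 2) by apply pow2_ge_0. assert (0 <= cc) by (unfold cc; pose proof (pow2_ge_0 (hh y j)); lra).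
    pose proof (Rabs_pos (pd (true :: true :: nil) s Xi Y)). pose proof (Rabs_pos (pd (false :: false :: nil) s Xi Y)).
    nra. }
  pose proof (A1_bnd C1 C2 ((hx ^ 2 + ly ^ 2) / 8 * Ms) ltac:(assert (0 <= hx^2 + ly^2) by nra; nra) (HC s11 B11) (HC s22 B22)) as HA.
  rewrite E1, T11, T22.
  replace (((f (Xi + d) - cc * g (Xi + d)) - (f (Xi - d) - cc * g (Xi - d))) / (2 * d)
      - / (2 * mu) * (s11 Xi Y - C1 - lam / (2 * lam + 2 * mu) * (s11 Xi Y - C1 + (s22 Xi Y - C2))))
    with ((((f (Xi + d) - cc * g (Xi + d)) - (f (Xi - d) - cc * g (Xi - d))) / (2 * d) - Derive_n f 1 Xi)
       + / (2 * mu) * (C1 - lam / (2 * lam + 2 * mu) * (C1 + C2)))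
    by (change (Derive_n f 1 Xi) with (pdx ux Xi Y); rewrite <- ELq; ring).
  eapply Rle_trans; [apply Rabs_triang|].
  assert (Hd2 : 2 * Mu * d ^ 2 <= hx ^ 2 * Mu) by (unfold d; assert (hh x i ^ 2 <= hx ^ 2) by (apply sq_le; lra); nra).
  assert (Hcc : Rabs cc * Mu <= ly ^ 2 * Mu).
  { rewrite Rabs_right by (apply Rle_ge; unfold cc; apply Rdiv_le_0_compat; [apply pow2_ge_0|lra]).
    assert (hh y j ^ 2 <= ly ^ 2) by (apply sq_le; lra). unfold cc. nra. }
  assert (HB : (hx ^ 2 + ly ^ 2) / 8 * Ms / mu <= (hx ^ 2 + ly ^ 2) * Ms / mu).
  { unfold Rdiv. apply Rmult_le_compat_r; [left; apply Rinv_0_lt_compat; lra|].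
    assert (0 <= hx^2 + ly^2) by nra. nra. }
  lra. Qed.

Lemma RB22 i j : (i < nx)%nat -> (j < ny)%nat ->
  Rabs (d_y y (Uy nx ny x y uy) (2 * i + 1)%nat j
        - / (2 * mu) * (tsig_kk x y s22 (2 * i + 1)%nat (2 * j + 1)%nat
             - lam / (2 * lam + 2 * mu) * (tsig_kk x y s11 (2 * i + 1)%nat (2 * j + 1)%nat
                                           + tsig_kk x y s22 (2 * i + 1)%nat (2 * j + 1)%nat)))
  <= (hx ^ 2 + ly ^ 2) * Mu + (hx ^ 2 + ly ^ 2) * Ms / mu.
Proof. intros Hi Hj. pose proof (Xc_range i Hi) as HXi. pose proof (Yc_range j Hj) as HY.
  pose proof (hx_ge i Hi) as Hhi. pose proof (ly_ge j Hj) as Hlj.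
  pose proof Mu_nn as HMu. pose proof Ms_nn as HMs.
  set (Xi := Xc i). set (Y := Yc j). set (d := hh y j / 2). set (cc := (hh x i) ^ 2 / 8).
  set (f := fun t => uy Xi t). set (g := fun t => pd (true :: true :: nil) uy Xi t).
  assert (Hyr : forall s, Y - d < s < Y + d -> 0 < s < b).
  { intros s Hs. pose proof (yr j ltac:(lia)). pose proof (yr (S j) ltac:(lia)).
    unfold Y, Yc, d, hh in *. lra. }
  assert (E1 : d_y y (Uy nx ny x y uy) (2 * i + 1)%nat j =
     ((f (Y + d) - cc * g (Y + d)) - (f (Y - d) - cc * g (Y - d))) / (2 * d)).
  { unfold d_y, dq. replace (2 * j + 2)%nat with (2 * S j)%nat by lia.
    rewrite (V3 i (S j)), (V3 i j) by lia. fold Xi.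
    replace (Y + d) with (y (S j)) by (unfold Y, Yc, d, hh; field).
    replace (Y - d) with (y j) by (unfold Y, Yc, d, hh; field).
    replace (2 * d) with (hh y j) by (unfold d; field).
    unfold f, g, cc.
    replace (Derive_n (fun t => uy t (y (S j))) 2 Xi) with (pd (repeat true 2 ++ nil) uy Xi (y (S j)))
      by (symmetry; apply (DnX uy nil (y (S j)) 2 Xi)).
    replace (Derive_n (fun t => uy t (y j)) 2 Xi) with (pd (repeat true 2 ++ nil) uy Xi (y j))
      by (symmetry; apply (DnX uy nil (y j) 2 Xi)). reflexivity. }
  pose proof (dq1d f g (smooth1_Y uy nil Xi Sv) (smooth1_Y uy (true :: true :: nil) Xi Sv) cc Mu Y d HMu
     ltac:(unfold d; lra)) as DQ.
  specialize (DQ ltac:(intros s Hs; pose proof (Hyr s Hs); split;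
     [ replace (Derive_n f 3 s) with (pd (repeat false 3 ++ nil) uy Xi s) by (symmetry; apply (DnY uy nil Xi 3 s));
       apply Bv; simpl; auto; lia
     | change (Rabs (pd (false :: true :: true :: nil) uy Xi s) <= Mu); apply Bv; simpl; auto; lia])).
  assert (ELq : / (2 * mu) * (s22 Xi Y - lam / (2 * lam + 2 * mu) * (s11 Xi Y + s22 Xi Y)) = pdy uy Xi Y).
  { destruct EL as [E _]. apply (E Xi Y); auto. }
  assert (T11 : tsig_kk x y s11 (2 * i + 1)%nat (2 * j + 1)%nat =
     s11 Xi Y - (cc * pd (true :: true :: nil) s11 Xi Y + (hh y j) ^ 2 / 8 * pd (false :: false :: nil) s11 Xi Y)).
  { unfold tsig_kk. rewrite !xh_odd, !div2_odd. fold (Xc i) (Yc j). fold Xi Y. unfold cc. simpl. ring. }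
  assert (T22 : tsig_kk x y s22 (2 * i + 1)%nat (2 * j + 1)%nat =
     s22 Xi Y - (cc * pd (true :: true :: nil) s22 Xi Y + (hh y j) ^ 2 / 8 * pd (false :: false :: nil) s22 Xi Y)).
  { unfold tsig_kk. rewrite !xh_odd, !div2_odd. fold (Xc i) (Yc j). fold Xi Y. unfold cc. simpl. ring. }
  set (C1 := cc * pd (true :: true :: nil) s11 Xi Y + (hh y j) ^ 2 / 8 * pd (false :: false :: nil) s11 Xi Y) in T11.
  set (C2 := cc * pd (true :: true :: nil) s22 Xi Y + (hh y j) ^ 2 / 8 * pd (false :: false :: nil) s22 Xi Y) in T22.
  assert (HC : forall s, W3inf_bound a b s Ms ->
     Rabs (cc * pd (true :: true :: nil) s Xi Y + (hh y j) ^ 2 / 8 * pd (false :: false :: nil) s Xi Y)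
       <= (hx ^ 2 + ly ^ 2) / 8 * Ms).
  { intros s Bs. eapply Rle_trans; [apply Rabs_triang|]. rewrite !Rabs_mult.
    pose proof (Bs (true :: true :: nil) ltac:(simpl; lia) Xi Y HXi HY).
    pose proof (Bs (false :: false :: nil) ltac:(simpl; lia) Xi Y HXi HY).
    assert (hh x i ^ 2 <= hx ^ 2) by (apply sq_le; lra).
    assert (hh y j ^ 2 <= ly ^ 2) by (apply sq_le; lra).
    rewrite (Rabs_right (hh y j ^ 2 / 8)) by (apply Rle_ge; apply Rdiv_le_0_compat; [apply pow2_ge_0|lra]).
    rewrite (Rabs_right cc) by (apply Rle_ge; unfold cc; apply Rdiv_le_0_compat; [apply pow2_ge_0|lra]).
    assert (Hcc : cc <= hx ^ 2 / 8) by (unfold cc; lra).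
    assert (0 <= hh y j ^ 2) by apply pow2_ge_0. assert (0 <= cc) by (unfold cc; pose proof (pow2_ge_0 (hh x i)); lra).
    pose proof (Rabs_pos (pd (true :: true :: nil) s Xi Y)). pose proof (Rabs_pos (pd (false :: false :: nil) s Xi Y)).
    nra. }
  pose proof (A1_bnd C2 C1 ((hx ^ 2 + ly ^ 2) / 8 * Ms) ltac:(assert (0 <= hx^2 + ly^2) by nra; nra) (HC s22 B22) (HC s11 B11)) as HA.
  rewrite E1, T11, T22.
  replace (((f (Y + d) - cc * g (Y + d)) - (f (Y - d) - cc * g (Y - d))) / (2 * d)
      - / (2 * mu) * (s22 Xi Y - C2 - lam / (2 * lam + 2 * mu) * (s11 Xi Y - C1 + (s22 Xi Y - C2))))
    with ((((f (Y + d) - cc * g (Y + d)) - (f (Y - d) - cc * g (Y - d))) / (2 * d) - Derive_n f 1 Y)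
       + / (2 * mu) * (C2 - lam / (2 * lam + 2 * mu) * (C2 + C1)))
    by (change (Derive_n f 1 Y) with (pdy uy Xi Y); rewrite <- ELq; ring).
  eapply Rle_trans; [apply Rabs_triang|].
  assert (Hd2 : 2 * Mu * d ^ 2 <= ly ^ 2 * Mu) by (unfold d; assert (hh y j ^ 2 <= ly ^ 2) by (apply sq_le; lra); nra).
  assert (Hcc : Rabs cc * Mu <= hx ^ 2 * Mu).
  { rewrite Rabs_right by (apply Rle_ge; unfold cc; apply Rdiv_le_0_compat; [apply pow2_ge_0|lra]).
    assert (hh x i ^ 2 <= hx ^ 2) by (apply sq_le; lra). unfold cc. nra. }
  assert (HB : (hx ^ 2 + ly ^ 2) / 8 * Ms / mu <= (hx ^ 2 + ly ^ 2) * Ms / mu).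
  { unfold Rdiv. apply Rmult_le_compat_r; [left; apply Rinv_0_lt_compat; lra|].
    assert (0 <= hx^2 + ly^2) by nra. nra. }
  lra. Qed.

Lemma RB1 i j : (1 <= i)%nat -> (i <= nx - 1)%nat -> (j < ny)%nat ->
  Rabs (fx (x i) (Yc j) - D_x nx x (tsig_kk x y s11) i (2 * j + 1)%nat
        - d_y y (tsig12 x y s12) (2 * i)%nat j) <= (hx ^ 2 + ly ^ 2) * Ms.
Proof. intros Hi1 Hi2 Hj. pose proof (Yc_range j Hj) as HY.
  pose proof (hx_ge i ltac:(lia)) as Hhi. pose proof (hx_ge (i-1) ltac:(lia)) as Hhm. pose proof (ly_ge j Hj) as Hlj.
  pose proof Ms_nn as HMs. pose proof (grid_int nx x a Gx i Hi1 Hi2) as Hxi.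
  set (t := x i). set (hp := hh x i). set (hm := hh x (i - 1)). set (Y := Yc j). set (cc := (hh y j) ^ 2 / 8).
  set (f := fun s => s11 s Y). set (g := fun s => pd (false :: false :: nil) s11 s Y).
  assert (Xp : Xc i = t + hp / 2) by (unfold Xc, t, hp, hh; field).
  assert (Xm : Xc (i - 1) = t - hm / 2) by (unfold Xc, t, hm, hh; replace (S (i-1)) with i by lia; field).
  assert (Hxr : forall s, t - hm / 2 < s < t + hp / 2 -> 0 < s < a).
  { intros s Hs. pose proof (Xc_range i ltac:(lia)). pose proof (Xc_range (i-1) ltac:(lia)). lra. }
  assert (E1 : D_x nx x (tsig_kk x y s11) i (2 * j + 1)%nat =
     ((f (t + hp / 2) - hp ^ 2 / 8 * Derive_n f 2 (t + hp / 2) - cc * g (t + hp / 2))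
      - (f (t - hm / 2) - hm ^ 2 / 8 * Derive_n f 2 (t - hm / 2) - cc * g (t - hm / 2))) / ((hm + hp) / 2)).
  { unfold D_x, Dq. destruct (Nat.eqb_spec i 0); [lia|]. destruct (Nat.eqb_spec i nx); [lia|].
    rewrite (hn_int nx x) by lia. fold hp hm.
    replace (2 * i - 1)%nat with (2 * (i - 1) + 1)%nat by lia.
    unfold tsig_kk. rewrite !xh_odd, !div2_odd. fold (Xc i) (Xc (i - 1)) (Yc j). fold Y hp hm.
    rewrite Xp, Xm. unfold f, g, cc.
    replace (Derive_n (fun s => s11 s Y) 2 (t + hp / 2)) with (pd (repeat true 2 ++ nil) s11 (t + hp / 2) Y)
      by (symmetry; apply (DnX s11 nil Y 2 (t + hp / 2))).
    replace (Derive_n (fun s => s11 s Y) 2 (t - hm / 2)) with (pd (repeat true 2 ++ nil) s11 (t - hm / 2) Y)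
      by (symmetry; apply (DnX s11 nil Y 2 (t - hm / 2))).
    reflexivity. }
  assert (Hp0 : 0 <= hp) by (unfold hp; lra). assert (Hm0 : 0 <= hm) by (unfold hm; lra).
  assert (Hpm : 0 < hp + hm) by (unfold hp, hm; lra).
  pose proof (core1d f g (smooth1_X s11 nil Y S11) (smooth1_X s11 (false :: false :: nil) Y S11) cc Ms t hp hm HMs
    Hp0 Hm0 Hpm) as C.
  specialize (C ltac:(intros s Hs; pose proof (Hxr s Hs); split;
     [ replace (Derive_n f 3 s) with (pd (repeat true 3 ++ nil) s11 s Y) by (symmetry; apply (DnX s11 nil Y 3 s));
       apply B11; simpl; auto; lia
     | change (Rabs (pd (true :: false :: false :: nil) s11 s Y) <= Ms); apply B11; simpl; auto; lia])).
  set (d := hh y j / 2). set (F := fun s => s12 t s).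
  assert (E2 : d_y y (tsig12 x y s12) (2 * i)%nat j =
     ((F (Y + d) - 0 * (fun _ => 0) (Y + d)) - (F (Y - d) - 0 * (fun _ => 0) (Y - d))) / (2 * d)).
  { unfold d_y, dq, tsig12. replace (2 * j + 2)%nat with (2 * S j)%nat by lia. rewrite !xh_even.
    replace (Y + d) with (y (S j)) by (unfold Y, Yc, d, hh; field).
    replace (Y - d) with (y j) by (unfold Y, Yc, d, hh; field).
    replace (2 * d) with (hh y j) by (unfold d; field). unfold F. fold t. field. lra. }
  assert (Hyr : forall s, Y - d < s < Y + d -> 0 < s < b).
  { intros s Hs. pose proof (yr j ltac:(lia)). pose proof (yr (S j) ltac:(lia)).
    unfold Y, Yc, d, hh in *. lra. }
  pose proof (dq1d F (fun _ => 0) (smooth1_Y s12 nil t S12) smooth1_0 0 Ms Y d HMs ltac:(unfold d; lra)) as D.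
  specialize (D ltac:(intros s Hs; pose proof (Hyr s Hs); split;
     [ replace (Derive_n F 3 s) with (pd (repeat false 3 ++ nil) s12 t s) by (symmetry; apply (DnY s12 nil t 3 s));
       apply B12; simpl; auto; lia
     | rewrite Dn_const0, Rabs_R0; auto])).
  assert (ELq : pdx s11 t Y + pdy s12 t Y = fx t Y).
  { destruct EL as [E _]. apply (E t Y); auto. }
  rewrite E1, E2. rewrite <- ELq.
  change (pdx s11 t Y) with (Derive_n f 1 t). change (pdy s12 t Y) with (Derive_n F 1 Y).
  match goal with |- Rabs (?A + ?B - ?P - ?Q) <= _ =>
    replace (A + B - P - Q) with (- (P - A) - (Q - B)) by ring end.
  eapply Rle_trans; [apply Rabs_triang|]. rewrite !Rabs_Ropp.
  rewrite Rabs_R0 in D. rewrite (Rabs_right cc) in C by (apply Rle_ge; unfold cc; apply Rdiv_le_0_compat; [apply pow2_ge_0|lra]).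
  assert (hp ^ 2 <= hx ^ 2) by (apply sq_le; unfold hp; lra). assert (hm ^ 2 <= hx ^ 2) by (apply sq_le; unfold hm; lra).
  assert (hh y j ^ 2 <= ly ^ 2) by (apply sq_le; lra).
  assert (Ms * (hp ^ 2 + hm ^ 2) / 6 <= Ms * hx ^ 2 / 3) by nra.
  assert (cc * Ms <= ly ^ 2 / 8 * Ms) by (unfold cc; nra).
  assert (2 * Ms * d ^ 2 <= ly ^ 2 / 2 * Ms) by (unfold d; nra).
  assert (0 <= hx ^ 2 * Ms) by (pose proof (pow2_ge_0 hx); nra).
  assert (0 <= ly ^ 2 * Ms) by (pose proof (pow2_ge_0 ly); nra).
  lra. Qed.

Lemma RB2 i j : (i < nx)%nat -> (1 <= j)%nat -> (j <= ny - 1)%nat ->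
  Rabs (fy (Xc i) (y j) - d_x x (tsig12 x y s12) i (2 * j)%nat
        - D_y ny y (tsig_kk x y s22) (2 * i + 1)%nat j) <= (hx ^ 2 + ly ^ 2) * Ms.
Proof. intros Hi Hj1 Hj2. pose proof (Xc_range i Hi) as HX.
  pose proof (ly_ge j ltac:(lia)) as Hhj. pose proof (ly_ge (j-1) ltac:(lia)) as Hhm. pose proof (hx_ge i Hi) as Hhi.
  pose proof Ms_nn as HMs. pose proof (grid_int ny y b Gy j Hj1 Hj2) as Hyj.
  set (t := y j). set (hp := hh y j). set (hm := hh y (j - 1)). set (X := Xc i). set (cc := (hh x i) ^ 2 / 8).
  set (f := fun s => s22 X s). set (g := fun s => pd (true :: true :: nil) s22 X s).
  assert (Yp : Yc j = t + hp / 2) by (unfold Yc, t, hp, hh; field).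
  assert (Ym : Yc (j - 1) = t - hm / 2) by (unfold Yc, t, hm, hh; replace (S (j-1)) with j by lia; field).
  assert (Hyr : forall s, t - hm / 2 < s < t + hp / 2 -> 0 < s < b).
  { intros s Hs. pose proof (Yc_range j ltac:(lia)). pose proof (Yc_range (j-1) ltac:(lia)). lra. }
  assert (E1 : D_y ny y (tsig_kk x y s22) (2 * i + 1)%nat j =
     ((f (t + hp / 2) - hp ^ 2 / 8 * Derive_n f 2 (t + hp / 2) - cc * g (t + hp / 2))
      - (f (t - hm / 2) - hm ^ 2 / 8 * Derive_n f 2 (t - hm / 2) - cc * g (t - hm / 2))) / ((hm + hp) / 2)).
  { unfold D_y, Dq. destruct (Nat.eqb_spec j 0); [lia|]. destruct (Nat.eqb_spec j ny); [lia|].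
    rewrite (hn_int ny y) by lia. fold hp hm.
    replace (2 * j - 1)%nat with (2 * (j - 1) + 1)%nat by lia.
    unfold tsig_kk. rewrite !xh_odd, !div2_odd. fold (Yc j) (Yc (j - 1)) (Xc i). fold X hp hm.
    rewrite Yp, Ym. unfold f, g, cc.
    replace (Derive_n (fun s => s22 X s) 2 (t + hp / 2)) with (pd (repeat false 2 ++ nil) s22 X (t + hp / 2))
      by (symmetry; apply (DnY s22 nil X 2 (t + hp / 2))).
    replace (Derive_n (fun s => s22 X s) 2 (t - hm / 2)) with (pd (repeat false 2 ++ nil) s22 X (t - hm / 2))
      by (symmetry; apply (DnY s22 nil X 2 (t - hm / 2))).
    simpl. unfold Rdiv. ring. }
  assert (Hp0 : 0 <= hp) by (unfold hp; lra). assert (Hm0 : 0 <= hm) by (unfold hm; lra).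
  assert (Hpm : 0 < hp + hm) by (unfold hp, hm; lra).
  pose proof (core1d f g (smooth1_Y s22 nil X S22) (smooth1_Y s22 (true :: true :: nil) X S22) cc Ms t hp hm HMs
    Hp0 Hm0 Hpm) as C.
  specialize (C ltac:(intros s Hs; pose proof (Hyr s Hs); split;
     [ replace (Derive_n f 3 s) with (pd (repeat false 3 ++ nil) s22 X s) by (symmetry; apply (DnY s22 nil X 3 s));
       apply B22; simpl; auto; lia
     | change (Rabs (pd (false :: true :: true :: nil) s22 X s) <= Ms); apply B22; simpl; auto; lia])).
  set (d := hh x i / 2). set (F := fun s => s12 s t).
  assert (E2 : d_x x (tsig12 x y s12) i (2 * j)%nat =
     ((F (X + d) - 0 * (fun _ => 0) (X + d)) - (F (X - d) - 0 * (fun _ => 0) (X - d))) / (2 * d)).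
  { unfold d_x, dq, tsig12. replace (2 * i + 2)%nat with (2 * S i)%nat by lia. rewrite !xh_even.
    replace (X + d) with (x (S i)) by (unfold X, Xc, d, hh; field).
    replace (X - d) with (x i) by (unfold X, Xc, d, hh; field).
    replace (2 * d) with (hh x i) by (unfold d; field). unfold F. fold t. field. unfold hh in *; lra. }
  assert (Hxr : forall s, X - d < s < X + d -> 0 < s < a).
  { intros s Hs. pose proof (xr i ltac:(lia)). pose proof (xr (S i) ltac:(lia)).
    unfold X, Xc, d, hh in *. lra. }
  pose proof (dq1d F (fun _ => 0) (smooth1_X s12 nil t S12) smooth1_0 0 Ms X d HMs ltac:(unfold d; lra)) as D.
  specialize (D ltac:(intros s Hs; pose proof (Hxr s Hs); split;
     [ replace (Derive_n F 3 s) with (pd (repeat true 3 ++ nil) s12 s t) by (symmetry; apply (DnX s12 nil t 3 s));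
       apply B12; simpl; auto; lia
     | rewrite Dn_const0, Rabs_R0; auto])).
  assert (ELq : pdx s12 X t + pdy s22 X t = fy X t).
  { destruct EL as [E _]. apply (E X t); auto. }
  rewrite E1, E2. rewrite <- ELq.
  change (pdy s22 X t) with (Derive_n f 1 t). change (pdx s12 X t) with (Derive_n F 1 X).
  match goal with |- Rabs (?A + ?B - ?P - ?Q) <= _ =>
    replace (A + B - P - Q) with (- (P - A) - (Q - B)) by ring end.
  eapply Rle_trans; [apply Rabs_triang|]. rewrite !Rabs_Ropp.
  rewrite Rabs_R0 in D. rewrite (Rabs_right cc) in C by (apply Rle_ge; unfold cc; apply Rdiv_le_0_compat; [apply pow2_ge_0|lra]).
  assert (hp ^ 2 <= ly ^ 2) by (apply sq_le; unfold hp; lra). assert (hm ^ 2 <= ly ^ 2) by (apply sq_le; unfold hm; lra).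
  assert (hh x i ^ 2 <= hx ^ 2) by (apply sq_le; lra).
  assert (Ms * (hp ^ 2 + hm ^ 2) / 6 <= Ms * ly ^ 2 / 3) by nra.
  assert (cc * Ms <= hx ^ 2 / 8 * Ms) by (unfold cc; nra).
  assert (2 * Ms * d ^ 2 <= hx ^ 2 / 2 * Ms) by (unfold d; nra).
  assert (0 <= hx ^ 2 * Ms) by (pose proof (pow2_ge_0 hx); nra).
  assert (0 <= ly ^ 2 * Ms) by (pose proof (pow2_ge_0 ly); nra).
  lra. Qed.

Lemma dq_sub xx p q i : dq xx (fun K => p K - q K) i = dq xx p i - dq xx q i.
Proof. unfold dq. unfold Rdiv. ring. Qed.
Lemma Dq_sub n xx p q i : Dq n xx (fun K => p K - q K) i = Dq n xx p i - Dq n xx q i.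
Proof. unfold Dq. destruct (Nat.eqb i 0); [|destruct (Nat.eqb i n)]; unfold Rdiv; ring. Qed.

Lemma UxM0 u K : Ux nx ny x y u K 0 = 0.
Proof. unfold Ux. rewrite (Nat.eqb_refl 0). rewrite !Bool.orb_true_r. auto. Qed.
Lemma UxMn u K : Ux nx ny x y u K (2 * ny) = 0.
Proof. unfold Ux. rewrite (Nat.eqb_refl (2 * ny)). rewrite !Bool.orb_true_r. auto. Qed.
Lemma UxK0 u M : Ux nx ny x y u 0 M = 0.
Proof. unfold Ux. rewrite (Nat.eqb_refl 0). auto. Qed.
Lemma UxKn u M : Ux nx ny x y u (2 * nx) M = 0.
Proof. unfold Ux. rewrite (Nat.eqb_refl (2 * nx)). rewrite !Bool.orb_true_r. auto. Qed.
Lemma UyM0 u K : Uy nx ny x y u K 0 = 0.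
Proof. unfold Uy. rewrite (Nat.eqb_refl 0). rewrite !Bool.orb_true_r. auto. Qed.
Lemma UyMn u K : Uy nx ny x y u K (2 * ny) = 0.
Proof. unfold Uy. rewrite (Nat.eqb_refl (2 * ny)). rewrite !Bool.orb_true_r. auto. Qed.
Lemma UyK0 u M : Uy nx ny x y u 0 M = 0.
Proof. unfold Uy. rewrite (Nat.eqb_refl 0). auto. Qed.
Lemma UyKn u M : Uy nx ny x y u (2 * nx) M = 0.
Proof. unfold Uy. rewrite (Nat.eqb_refl (2 * nx)). rewrite !Bool.orb_true_r. auto. Qed.

Variables Wx Wy Z11 Z22 Z12 : nat -> nat -> R.
Hypothesis MS : MACE_solution nx ny x y lam mu fx fy Wx Wy Z11 Z22 Z12.

Definition Cfin := sqrt (Ken a b lam mu) * (2 + 1 / mu) * (2 + 1 / mu + 2 / (lam + mu)) + 1.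

Lemma main_est :
  normTM nx ny x y (fun K M => Wx K M - tux x y ux K M)
    + normMT nx ny x y (fun K M => Wy K M - tuy x y uy K M)
    <= Cfin * (hx ^ 2 + ly ^ 2) * (Mu + Ms) /\
  normT nx ny x y (fun K M => Z12 K M - tsig12 x y s12 K M)
    <= Cfin * mu * (hx ^ 2 + ly ^ 2) * (Mu + Ms) /\
  normM nx ny x y (fun K M => Z11 K M - tsig_kk x y s11 K M)
    + normM nx ny x y (fun K M => Z22 K M - tsig_kk x y s22 K M)
    <= Cfin * (lam + mu) * (hx ^ 2 + ly ^ 2) * (Mu + Ms).
Proof.
  pose proof (grid_n nx x a Gx Ha) as Hnx. pose proof (grid_n ny y b Gy Hb) as Hny.
  destruct MS as [MW1 [MW2 [MW3 [MW4 [MC [M12 [ME1 ME2]]]]]]].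
  set (ex := fun K M => Wx K M - Ux nx ny x y ux K M).
  set (ey := fun K M => Wy K M - Uy nx ny x y uy K M).
  set (z11 := fun K M => Z11 K M - tsig_kk x y s11 K M).
  set (z22 := fun K M => Z22 K M - tsig_kk x y s22 K M).
  set (z12 := fun K M => Z12 K M - tsig12 x y s12 K M).
  set (c := lam / (2 * lam + 2 * mu)).
  set (r11 := fun K M => / (2 * mu) * (z11 K M - c * (z11 K M + z22 K M)) - d_x x ex (Nat.div K 2) M).
  set (r22 := fun K M => / (2 * mu) * (z22 K M - c * (z11 K M + z22 K M)) - d_y y ey K (Nat.div M 2)).
  set (r12 := fun K M => z12 K M - mu * (D_y ny y ex K (Nat.div M 2) + D_x nx x ey (Nat.div K 2) M)).
  set (r1 := fun K M => D_x nx x z11 (Nat.div K 2) M + d_y y z12 K (Nat.div M 2)).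
  set (r2 := fun K M => d_x x z12 (Nat.div K 2) M + D_y ny y z22 K (Nat.div M 2)).
  set (Q := (hx ^ 2 + ly ^ 2) * (Mu + Ms)).
  set (rho := (2 + 1 / mu) * Q).
  pose proof Mu_nn as HMu. pose proof Ms_nn as HMs.
  assert (HQ : 0 <= Q) by (unfold Q; apply Rmult_le_pos; [pose proof (pow2_ge_0 hx); pose proof (pow2_ge_0 ly); lra | lra]).
  assert (Hk : 0 < 2 + 1 / mu) by (assert (0 < 1 / mu) by (apply Rdiv_lt_0_compat; lra); lra).
  assert (Hrho : 0 <= rho) by (unfold rho; apply Rmult_le_pos; lra).
  assert (Hdx : forall p q i M, d_x x (fun K M => p K M - q K M) i M = d_x x p i M - d_x x q i M)
    by (intros; unfold d_x; apply dq_sub).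
  assert (Hdy : forall p q K j, d_y y (fun K M => p K M - q K M) K j = d_y y p K j - d_y y q K j)
    by (intros; unfold d_y; apply dq_sub).
  assert (HDx : forall p q i M, D_x nx x (fun K M => p K M - q K M) i M = D_x nx x p i M - D_x nx x q i M)
    by (intros; unfold D_x; apply Dq_sub).
  assert (HDy : forall p q K j, D_y ny y (fun K M => p K M - q K M) K j = D_y ny y p K j - D_y ny y q K j)
    by (intros; unfold D_y; apply Dq_sub).
  pose proof (energy_bound nx ny x y a b lam mu Gx Gy Ha Hb Hlam Hmu ex ey z11 z22 z12 r11 r22 r12 r1 r2 rho) as Ebd.
  assert (hex1 : forall i, (i <= nx)%nat -> ex (2*i)%nat 0%nat = 0 /\ ex (2*i)%nat (2*ny)%nat = 0).
  { intros i Hi. unfold ex. destruct (MW1 i Hi) as [A1 A2]. rewrite A1, A2, UxM0, UxMn. split; ring. }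
  assert (hex2 : forall j, (j < ny)%nat -> ex 0%nat (2*j+1)%nat = 0 /\ ex (2*nx)%nat (2*j+1)%nat = 0).
  { intros j Hj. unfold ex. destruct (MW2 j Hj) as [A1 A2]. rewrite A1, A2, UxK0, UxKn. split; ring. }
  assert (hey1 : forall i, (i < nx)%nat -> ey (2*i+1)%nat 0%nat = 0 /\ ey (2*i+1)%nat (2*ny)%nat = 0).
  { intros i Hi. unfold ey. destruct (MW3 i Hi) as [A1 A2]. rewrite A1, A2, UyM0, UyMn. split; ring. }
  assert (hey2 : forall j, (j <= ny)%nat -> ey 0%nat (2*j)%nat = 0 /\ ey (2*nx)%nat (2*j)%nat = 0).
  { intros j Hj. unfold ey. destruct (MW4 j Hj) as [A1 A2]. rewrite A1, A2, UyK0, UyKn. split; ring. }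
  assert (hC : forall i j, (i < nx)%nat -> (j < ny)%nat ->
    / (2 * mu) * (z11 (2*i+1)%nat (2*j+1)%nat - lam / (2 * lam + 2 * mu) * (z11 (2*i+1)%nat (2*j+1)%nat + z22 (2*i+1)%nat (2*j+1)%nat))
      = d_x x ex i (2*j+1)%nat + r11 (2*i+1)%nat (2*j+1)%nat /\
    / (2 * mu) * (z22 (2*i+1)%nat (2*j+1)%nat - lam / (2 * lam + 2 * mu) * (z11 (2*i+1)%nat (2*j+1)%nat + z22 (2*i+1)%nat (2*j+1)%nat))
      = d_y y ey (2*i+1)%nat j + r22 (2*i+1)%nat (2*j+1)%nat).
  { intros i j Hi Hj. unfold r11, r22. rewrite !div2_odd. fold c. split; ring. }
  assert (h12 : forall i j, (i <= nx)%nat -> (j <= ny)%nat ->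
    z12 (2*i)%nat (2*j)%nat = mu * (D_y ny y ex (2*i)%nat j + D_x nx x ey i (2*j)%nat) + r12 (2*i)%nat (2*j)%nat).
  { intros i j Hi Hj. unfold r12. rewrite !div2_even. ring. }
  assert (hE1 : forall i j, (1 <= i)%nat -> (i <= nx - 1)%nat -> (j < ny)%nat ->
    D_x nx x z11 i (2 * j + 1)%nat + d_y y z12 (2 * i)%nat j = r1 (2*i)%nat (2*j+1)%nat).
  { intros i j H1 H2 H3. unfold r1. rewrite div2_even, div2_odd. reflexivity. }
  assert (hE2 : forall i j, (i < nx)%nat -> (1 <= j)%nat -> (j <= ny - 1)%nat ->
    d_x x z12 i (2 * j)%nat + D_y ny y z22 (2 * i + 1)%nat j = r2 (2*i+1)%nat (2*j)%nat).
  { intros i j H1 H2 H3. unfold r2. rewrite div2_even, div2_odd. reflexivity. }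
  assert (H2nn : 0 <= hx ^ 2 + ly ^ 2) by (pose proof (pow2_ge_0 hx); pose proof (pow2_ge_0 ly); lra).
  assert (Hrho1 : (hx ^ 2 + ly ^ 2) * Mu + (hx ^ 2 + ly ^ 2) * Ms / mu <= rho).
  { unfold rho, Q. assert (0 <= (hx ^ 2 + ly ^ 2) * Mu / mu) by (apply Rdiv_le_0_compat; [nra|lra]).
    assert (0 <= (hx ^ 2 + ly ^ 2) * Mu) by nra. assert (0 <= (hx ^ 2 + ly ^ 2) * Ms) by nra.
    assert ((2 + 1 / mu) * ((hx ^ 2 + ly ^ 2) * (Mu + Ms)) = 2 * ((hx ^ 2 + ly ^ 2) * Mu) + 2 * ((hx ^ 2 + ly ^ 2) * Ms)
       + (hx ^ 2 + ly ^ 2) * Mu / mu + (hx ^ 2 + ly ^ 2) * Ms / mu) by (field; lra). lra. }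
  assert (Hrho2 : (hx ^ 2 + ly ^ 2) * Ms <= rho).
  { unfold rho, Q. assert (0 <= (hx ^ 2 + ly ^ 2) * Mu / mu) by (apply Rdiv_le_0_compat; [nra|lra]).
    assert (0 <= (hx ^ 2 + ly ^ 2) * Ms / mu) by (apply Rdiv_le_0_compat; [nra|lra]).
    assert (0 <= (hx ^ 2 + ly ^ 2) * Mu) by nra. assert (0 <= (hx ^ 2 + ly ^ 2) * Ms) by nra.
    assert ((2 + 1 / mu) * ((hx ^ 2 + ly ^ 2) * (Mu + Ms)) = 2 * ((hx ^ 2 + ly ^ 2) * Mu) + 2 * ((hx ^ 2 + ly ^ 2) * Ms)
       + (hx ^ 2 + ly ^ 2) * Mu / mu + (hx ^ 2 + ly ^ 2) * Ms / mu) by (field; lra). lra. }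
  assert (bB11 : forall i j, (i < nx)%nat -> (j < ny)%nat ->
    Rabs (r11 (2*i+1)%nat (2*j+1)%nat) <= rho /\ Rabs (r22 (2*i+1)%nat (2*j+1)%nat) <= rho).
  { intros i j Hi Hj. destruct (MC i j Hi Hj) as [C1 C2]. cbv zeta in C1, C2. split.
    - unfold r11, z11, z22, ex. rewrite div2_odd, Hdx. fold c in C1. rewrite <- C1.
      eapply Rle_trans; [|apply Hrho1]. eapply Rle_trans; [|apply (RB11 i j Hi Hj)]. fold c. right. f_equal. ring.
    - unfold r22, z11, z22, ey. rewrite div2_odd, Hdy. fold c in C2. rewrite <- C2.
      eapply Rle_trans; [|apply Hrho1]. eapply Rle_trans; [|apply (RB22 i j Hi Hj)]. fold c. right. f_equal. ring. }
  assert (bB12 : forall i j, (i <= nx)%nat -> (j <= ny)%nat -> Rabs (r12 (2*i)%nat (2*j)%nat) <= mu * rho).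
  { intros i j Hi Hj. unfold r12, z12, ex, ey. rewrite !div2_even, HDy, HDx.
    rewrite (M12 i j Hi Hj). unfold tsig12. rewrite !xh_even. rewrite (sig12_node i j Hi Hj).
    pose proof (RB12y i j Hi Hj) as R1. pose proof (RB12x i j Hi Hj) as R2.
    replace (mu * (D_y ny y Wx (2 * i) j + D_x nx x Wy i (2 * j)) -
      mu * (pdy ux (x i) (y j) + pdx uy (x i) (y j)) -
      mu * (D_y ny y Wx (2 * i) j - D_y ny y (Ux nx ny x y ux) (2 * i) j +
            (D_x nx x Wy i (2 * j) - D_x nx x (Uy nx ny x y uy) i (2 * j))))
      with (mu * ((D_y ny y (Ux nx ny x y ux) (2 * i) j - pdy ux (x i) (y j))
               + (D_x nx x (Uy nx ny x y uy) i (2 * j) - pdx uy (x i) (y j)))) by ring.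
    rewrite Rabs_mult, Rabs_right by lra. apply Rmult_le_compat_l; [lra|].
    eapply Rle_trans; [apply Rabs_triang|]. unfold rho, Q.
    assert ((2 + 1 / mu) * ((hx ^ 2 + ly ^ 2) * (Mu + Ms)) = 2 * ((hx ^ 2 + ly ^ 2) * Mu) + 2 * ((hx ^ 2 + ly ^ 2) * Ms)
       + (hx ^ 2 + ly ^ 2) * Mu / mu + (hx ^ 2 + ly ^ 2) * Ms / mu) by (field; lra).
    assert (0 <= (hx ^ 2 + ly ^ 2) * Mu / mu) by (apply Rdiv_le_0_compat; [nra|lra]).
    assert (0 <= (hx ^ 2 + ly ^ 2) * Ms / mu) by (apply Rdiv_le_0_compat; [nra|lra]).
    assert (0 <= (hx ^ 2 + ly ^ 2) * Ms) by nra.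
    assert (0 <= hx ^ 2 * Mu) by (pose proof (pow2_ge_0 hx); nra). assert (0 <= ly ^ 2 * Mu) by (pose proof (pow2_ge_0 ly); nra).
    change (hmax nx x) with hx in R2. change (hmax ny y) with ly in R1. lra. }
  assert (bB1 : forall i j, (1 <= i)%nat -> (i <= nx - 1)%nat -> (j < ny)%nat -> Rabs (r1 (2*i)%nat (2*j+1)%nat) <= rho).
  { intros i j H1 H2 H3. unfold r1, z11, z12. rewrite div2_even, div2_odd, HDx, Hdy.
    pose proof (ME1 i j H1 H2 H3) as E. rewrite xh_even, xh_odd in E. fold (Yc j) in E.
    replace (D_x nx x Z11 i (2 * j + 1) - D_x nx x (tsig_kk x y s11) i (2 * j + 1) +
      (d_y y Z12 (2 * i) j - d_y y (tsig12 x y s12) (2 * i) j))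
      with ((D_x nx x Z11 i (2 * j + 1) + d_y y Z12 (2 * i) j) - D_x nx x (tsig_kk x y s11) i (2 * j + 1)
            - d_y y (tsig12 x y s12) (2 * i) j) by ring.
    rewrite E. eapply Rle_trans; [apply (RB1 i j H1 H2 H3)|]. apply Hrho2. }
  assert (bB2 : forall i j, (i < nx)%nat -> (1 <= j)%nat -> (j <= ny - 1)%nat -> Rabs (r2 (2*i+1)%nat (2*j)%nat) <= rho).
  { intros i j H1 H2 H3. unfold r2, z22, z12. rewrite div2_even, div2_odd, Hdx, HDy.
    pose proof (ME2 i j H1 H2 H3) as E. rewrite xh_even, xh_odd in E. fold (Xc i) in E.
    replace (d_x x Z12 i (2 * j) - d_x x (tsig12 x y s12) i (2 * j) +
      (D_y ny y Z22 (2 * i + 1) j - D_y ny y (tsig_kk x y s22) (2 * i + 1) j))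
      with ((d_x x Z12 i (2 * j) + D_y ny y Z22 (2 * i + 1) j) - d_x x (tsig12 x y s12) i (2 * j)
            - D_y ny y (tsig_kk x y s22) (2 * i + 1) j) by ring.
    rewrite E. eapply Rle_trans; [apply (RB2 i j H1 H2 H3)|]. apply Hrho2. }
  specialize (Ebd hex1 hex2 hey1 hey2 hC h12 hE1 hE2 bB11 bB12 bB1 bB2).
  destruct Ebd as [EZ11 [EZ22 [EZ12 [EEX EEY]]]].
  assert (nTM : normTM nx ny x y (fun K M => Wx K M - tux x y ux K M) =
     sqrt (DS (nx - 1) ny (fun i => hn nx x (S i)) (hh y) (fun i j => ex (2 * S i)%nat (2 * j + 1)%nat ^ 2))).
  { unfold normTM, DS. f_equal. apply rsum_ext; intros i Hi; apply rsum_ext; intros j Hj.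
    unfold ex, Ux. rewrite (proj2 (Nat.eqb_neq (2 * S i) 0)) by lia.
    rewrite (proj2 (Nat.eqb_neq (2 * S i) (2 * nx))) by lia.
    rewrite (proj2 (Nat.eqb_neq (2 * j + 1) 0)) by lia.
    rewrite (proj2 (Nat.eqb_neq (2 * j + 1) (2 * ny))) by lia. reflexivity. }
  assert (nMT : normMT nx ny x y (fun K M => Wy K M - tuy x y uy K M) =
     sqrt (DS nx (ny - 1) (hh x) (fun j => hn ny y (S j)) (fun i j => ey (2 * i + 1)%nat (2 * S j)%nat ^ 2))).
  { unfold normMT, DS. f_equal. apply rsum_ext; intros i Hi; apply rsum_ext; intros j Hj.
    unfold ey, Uy. rewrite (proj2 (Nat.eqb_neq (2 * i + 1) 0)) by lia.
    rewrite (proj2 (Nat.eqb_neq (2 * i + 1) (2 * nx))) by lia.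
    rewrite (proj2 (Nat.eqb_neq (2 * S j) 0)) by lia.
    rewrite (proj2 (Nat.eqb_neq (2 * S j) (2 * ny))) by lia. reflexivity. }
  assert (SQ : forall S0, 0 <= S0 -> S0 <= Ken a b lam mu * rho ^ 2 -> sqrt S0 <= sqrt (Ken a b lam mu) * rho).
  { intros S0 HS0 HS. destruct (Rle_or_lt 0 (Ken a b lam mu)) as [HK|HK].
    - rewrite <- (sqrt_pow2 rho Hrho), <- sqrt_mult_alt by auto. apply sqrt_le_1_alt. auto.
    - assert (Ken a b lam mu * rho ^ 2 <= 0) by (pose proof (pow2_ge_0 rho); nra).
      assert (S0 = 0) by lra. subst. rewrite sqrt_0. pose proof (sqrt_pos (Ken a b lam mu)). nra. }
  assert (wTMn : 0 <= DS (nx - 1) ny (fun i => hn nx x (S i)) (hh y) (fun i j => ex (2 * S i)%nat (2 * j + 1)%nat ^ 2)).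
  { apply DS_nonneg; intros; try apply pow2_ge_0. left; apply (hn_pos nx x a Gx Ha); lia. left; apply (hh_pos ny y b Gy); lia. }
  assert (wMTn : 0 <= DS nx (ny - 1) (hh x) (fun j => hn ny y (S j)) (fun i j => ey (2 * i + 1)%nat (2 * S j)%nat ^ 2)).
  { apply DS_nonneg; intros; try apply pow2_ge_0. left; apply (hh_pos nx x a Gx); lia. left; apply (hn_pos ny y b Gy Hb); lia. }
  assert (wTn : 0 <= DS (S nx) (S ny) (hn nx x) (hn ny y) (fun i j => z12 (2 * i)%nat (2 * j)%nat ^ 2)).
  { apply DS_nonneg; intros; try apply pow2_ge_0. left; apply (hn_pos nx x a Gx Ha); lia. left; apply (hn_pos ny y b Gy Hb); lia. }
  assert (wM1 : 0 <= DS nx ny (hh x) (hh y) (fun i j => z11 (2 * i + 1)%nat (2 * j + 1)%nat ^ 2)).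
  { apply DS_nonneg; intros; try apply pow2_ge_0. left; apply (hh_pos nx x a Gx); lia. left; apply (hh_pos ny y b Gy); lia. }
  assert (wM2 : 0 <= DS nx ny (hh x) (hh y) (fun i j => z22 (2 * i + 1)%nat (2 * j + 1)%nat ^ 2)).
  { apply DS_nonneg; intros; try apply pow2_ge_0. left; apply (hh_pos nx x a Gx); lia. left; apply (hh_pos ny y b Gy); lia. }
  pose proof (SQ _ wTMn EEX) as N1. pose proof (SQ _ wMTn EEY) as N2. pose proof (SQ _ wTn EZ12) as N3.
  pose proof (SQ _ wM1 EZ11) as N4. pose proof (SQ _ wM2 EZ22) as N5.
  set (A := sqrt (Ken a b lam mu) * (2 + 1 / mu)).
  assert (HA : 0 <= A) by (unfold A; apply Rmult_le_pos; [apply sqrt_pos|lra]).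
  assert (HAr : sqrt (Ken a b lam mu) * rho = A * Q) by (unfold A, rho; ring).
  rewrite HAr in N1, N2, N3, N4, N5.
  assert (HCQ : Cfin * (hx ^ 2 + ly ^ 2) * (Mu + Ms) = Cfin * Q) by (unfold Q; ring).
  assert (HCQ2 : Cfin * mu * (hx ^ 2 + ly ^ 2) * (Mu + Ms) = (Cfin * mu) * Q) by (unfold Q; ring).
  assert (HCQ3 : Cfin * (lam + mu) * (hx ^ 2 + ly ^ 2) * (Mu + Ms) = (Cfin * (lam + mu)) * Q) by (unfold Q; ring).
  assert (Hi1 : 0 < 1 / mu) by (apply Rdiv_lt_0_compat; lra).
  assert (Hi2 : 0 < 2 / (lam + mu)) by (apply Rdiv_lt_0_compat; lra).
  assert (D1 : Cfin - 2 * A = A * (1 / mu + 2 / (lam + mu)) + 1) by (unfold Cfin; fold A; ring).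
  assert (D2 : Cfin * mu - A = A * (2 * mu + 2 * mu / (lam + mu)) + mu) by (unfold Cfin; fold A; field; lra).
  assert (D3 : Cfin * (lam + mu) - 2 * A = A * (2 + 1 / mu) * (lam + mu) + (lam + mu)) by (unfold Cfin; fold A; field; lra).
  assert (P1 : 0 <= (Cfin - 2 * A) * Q).
  { rewrite D1. apply Rmult_le_pos; auto. assert (0 <= A * (1 / mu + 2 / (lam + mu))) by (apply Rmult_le_pos; lra). lra. }
  assert (P2 : 0 <= (Cfin * mu - A) * Q).
  { rewrite D2. apply Rmult_le_pos; auto. assert (0 <= 2 * mu / (lam + mu)) by (apply Rdiv_le_0_compat; lra).
    assert (0 <= A * (2 * mu + 2 * mu / (lam + mu))) by (apply Rmult_le_pos; lra). lra. }
  assert (P3 : 0 <= (Cfin * (lam + mu) - 2 * A) * Q).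
  { rewrite D3. apply Rmult_le_pos; auto. assert (0 <= A * (2 + 1 / mu) * (lam + mu)) by (apply Rmult_le_pos; [apply Rmult_le_pos|]; lra). lra. }
  rewrite HCQ, HCQ2, HCQ3, nTM, nMT. split; [|split].
  - lra.
  - assert (nT : normT nx ny x y z12 =
      sqrt (DS (S nx) (S ny) (hn nx x) (hn ny y) (fun i j => z12 (2 * i)%nat (2 * j)%nat ^ 2))) by reflexivity.
    rewrite nT. lra.
  - assert (nM1 : normM nx ny x y z11 =
      sqrt (DS nx ny (hh x) (hh y) (fun i j => z11 (2 * i + 1)%nat (2 * j + 1)%nat ^ 2))) by reflexivity.
    assert (nM2 : normM nx ny x y z22 =
      sqrt (DS nx ny (hh x) (hh y) (fun i j => z22 (2 * i + 1)%nat (2 * j + 1)%nat ^ 2))) by reflexivity.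
    rewrite nM1, nM2. lra.
Qed.
End Main.

Theorem theorem4p3 :
  forall (a b lam mu C0 : R),
    0 < a -> 0 < b -> 0 < lam -> 0 < mu -> 0 < C0 ->
  exists C delta : R, 0 < C /\ 0 < delta /\
  forall (nx ny : nat) (x y : nat -> R),
    is_grid nx x a -> is_grid ny y b ->
    (* regularity: min_{i,j} {h_{i+1/2}, l_{j+1/2}} >= C0 max_{i,j} {...} *)
    (forall i, (i < nx)%nat -> hh x i >= C0 * Rmax (hmax nx x) (hmax ny y)) ->
    (forall j, (j < ny)%nat -> hh y j >= C0 * Rmax (hmax nx x) (hmax ny y)) ->
    hmax nx x < delta -> hmax ny y < delta ->
  forall (ux uy s11 s12 s22 fx fy : R -> R -> R),
    smooth2 ux -> smooth2 uy -> smooth2 s11 -> smooth2 s12 -> smooth2 s22 ->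
    elasticity_solution a b lam mu ux uy s11 s12 s22 fx fy ->
  forall (Mu Ms : R),
    W3inf_bound a b ux Mu -> W3inf_bound a b uy Mu ->
    W3inf_bound a b s11 Ms -> W3inf_bound a b s12 Ms -> W3inf_bound a b s22 Ms ->
  forall (Wx Wy Z11 Z22 Z12 : nat -> nat -> R),
    MACE_solution nx ny x y lam mu fx fy Wx Wy Z11 Z22 Z12 ->
  let h := hmax nx x in
  let l := hmax ny y in
  normTM nx ny x y (fun K M => Wx K M - tux x y ux K M)
    + normMT nx ny x y (fun K M => Wy K M - tuy x y uy K M)
    <= C * (h ^ 2 + l ^ 2) * (Mu + Ms) /\
  normT nx ny x y (fun K M => Z12 K M - tsig12 x y s12 K M)
    <= C * mu * (h ^ 2 + l ^ 2) * (Mu + Ms) /\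
  normM nx ny x y (fun K M => Z11 K M - tsig_kk x y s11 K M)
    + normM nx ny x y (fun K M => Z22 K M - tsig_kk x y s22 K M)
    <= C * (lam + mu) * (h ^ 2 + l ^ 2) * (Mu + Ms).
Proof.
  intros a b lam mu C0 Ha Hb Hlam Hmu HC0. exists (Cfin a b lam mu), 1.
  split; [|split; [lra|]].
  - unfold Cfin. assert (0 < 1 / mu) by (apply Rdiv_lt_0_compat; lra).
    assert (0 < 2 / (lam + mu)) by (apply Rdiv_lt_0_compat; lra).
    pose proof (sqrt_pos (Ken a b lam mu)).
    assert (0 <= sqrt (Ken a b lam mu) * (2 + 1 / mu) * (2 + 1 / mu + 2 / (lam + mu))) by
      (apply Rmult_le_pos; [apply Rmult_le_pos|]; lra). lra.
  - intros nx ny x y Gx Gy _ _ _ _ ux uy s11 s12 s22 fx fy Su Sv S11 S12 S22 EL Mu Ms Bu Bv B11 B12 B22 Wx Wy Z11 Z22 Z12 MS.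
    cbv zeta. eapply main_est; eauto.
Qed.
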